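(* Let $(H,h)$ be an equivariant pair and let $\{(H_n,h_n)\}$ be a tame sequence derived from $(H,h)$. Then there exist $f,g\in\mathcal{I}$ such that, setting $H'=fHg$ and $h'=fhg$, there is a subsequence along which $H_n$ converges to $H'$ uniformly on compact subsets of $\mathbb{H}^3$ and $h_n$ converges to $h'$ uniformly on $S$.
   Context: $\mathbb{H}^3$ is the upper half space model $\mathbb{C}\times(0,\infty)$ of hyperbolic $3$-space, with ideal boundary the Riemann sphere $S=\mathbb{C}\cup\{\infty\}$ (uniform convergence on $S$ is with respect to the spherical metric); $\mathcal{I}$ is the isometry group of $\mathbb{H}^3$, and each element of $\mathcal{I}$ extends to a conformal transformation of $S$, so $\mathcal{I}$ acts on $\mathbb{H}^3\cup S$. A nice lattice is a subgroup $\Gamma\subset\mathcal{I}$ acting freely, properly discontinuously and cocompactly on $\mathbb{H}^3$. An equivariant pair $(H,h)$ consists of a bi-Lipschitz bijection $H:\mathbb{H}^3\to\mathbb{H}^3$ and a homeomorphism $h:S\to S$ such that $H\cup h$ is continuous on $\mathbb{H}^3\cup S$, together with nice lattices $\Gamma_1,\Gamma_2$ with $H\Gamma_1H^{-1}=\Gamma_2$ and $h\Gamma_1h^{-1}=\Gamma_2$. A sequence $\{(H_n,h_n)\}$ is derived from $(H,h)$ if $H_n=f_nHg_n$ and $h_n=f_nhg_n$ for some $f_n,g_n\in\mathcal{I}$; it is tame if $\{H_n(p)\}$ is bounded for every $p\in\mathbb{H}^3$. *)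

(* Defs.v *)
From Stdlib Require Import Reals Lra List.
Open Scope R_scope.

(** * Upper half space model H^3 = C x (0,oo), points (x, y, t) with t > 0 *)
Record H3 : Type := mkH3 { hx : R; hy : R; ht : R; ht_pos : 0 < ht }.

(** Ideal boundary: the Riemann sphere S = C u {oo}, C identified with R x R. *)
Inductive Sph : Type := Fin (x y : R) | Inf.

Definition arcosh (u : R) : R := ln (u + sqrt (u * u - 1)).
Definition hd (p q : H3) : R :=
  arcosh (1 + ((hx p - hx q)^2 + (hy p - hy q)^2 + (ht p - ht q)^2)
                / (2 * ht p * ht q)).

(** The compactification H^3 u S: the closure of the upper half space in
    R^3 u {oo} = S^3, via inverse stereographic projection R^3 -> S^3 c R^4. *)
Definition X : Type := (H3 + Sph)%type.

Definition stereo (x y t : R) : R * R * R * R :=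
  let n := x^2 + y^2 + t^2 in
  (2 * x / (n + 1), 2 * y / (n + 1), 2 * t / (n + 1), (n - 1) / (n + 1)).

Definition embX (a : X) : R * R * R * R :=
  match a with
  | inl p => stereo (hx p) (hy p) (ht p)
  | inr (Fin x y) => stereo x y 0
  | inr Inf => (0, 0, 0, 1)
  end.

Definition dist4 (u v : R * R * R * R) : R :=
  let '(a1, a2, a3, a4) := u in let '(b1, b2, b3, b4) := v in
  sqrt ((a1 - b1)^2 + (a2 - b2)^2 + (a3 - b3)^2 + (a4 - b4)^2).

Definition dX (a b : X) : R := dist4 (embX a) (embX b).

(** spherical (great-circle) metric on S, via stereographic projection onto
    the unit sphere: 2 asin (chord / 2) *)
Definition dS (z w : Sph) : R := 2 * asin (dX (inr z) (inr w) / 2).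

Definition joinmap (F : H3 -> H3) (f : Sph -> Sph) (a : X) : X :=
  match a with inl p => inl (F p) | inr z => inr (f z) end.

Definition continuousX (J : X -> X) : Prop :=
  forall a eps, 0 < eps -> exists delta, 0 < delta /\
    forall b, dX a b < delta -> dX (J a) (J b) < eps.

Definition continuousS (f : Sph -> Sph) : Prop :=
  forall z eps, 0 < eps -> exists delta, 0 < delta /\
    forall w, dS z w < delta -> dS (f z) (f w) < eps.

Definition bijective {A B : Type} (f : A -> B) : Prop :=
  (forall a b, f a = f b -> a = b) /\ (forall b, exists a, f a = b).

(** * The isometry group I.  An element of I is an isometry G of H^3 together
    with its (unique) extension g to S, i.e. G u g is continuous on H^3 u S. *)
Definition isom (G : H3 -> H3) (g : Sph -> Sph) : Prop :=
  bijective G /\ (forall p q, hd (G p) (G q) = hd p q) /\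
  continuousX (joinmap G g).

Definition subgroupI (Gam : (H3 -> H3) -> (Sph -> Sph) -> Prop) : Prop :=
  (forall G g, Gam G g -> isom G g) /\
  Gam (fun p => p) (fun z => z) /\
  (forall G g G' g', Gam G g -> Gam G' g' ->
     Gam (fun p => G (G' p)) (fun z => g (g' z))) /\
  (forall G g, Gam G g -> exists G' g', Gam G' g' /\
     (forall p, G (G' p) = p) /\ (forall p, G' (G p) = p) /\
     (forall z, g (g' z) = z) /\ (forall z, g' (g z) = z)).

Definition compactH (K : H3 -> Prop) : Prop :=
  forall u : nat -> H3, (forall n, K (u n)) ->
    exists (phi : nat -> nat) (q : H3), (forall k, (phi k < phi (S k))%nat) /\ K q /\
      forall eps, 0 < eps -> exists N, forall k, (N <= k)%nat -> hd (u (phi k)) q < eps.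

Definition acts_freely (Gam : (H3 -> H3) -> (Sph -> Sph) -> Prop) : Prop :=
  forall G g, Gam G g -> (exists p, G p = p) -> forall q, G q = q.

Definition properly_discontinuous (Gam : (H3 -> H3) -> (Sph -> Sph) -> Prop) : Prop :=
  forall K, compactH K ->
    exists l : list ((H3 -> H3) * (Sph -> Sph)),
      forall G g, Gam G g -> (exists q, K q /\ K (G q)) -> In (G, g) l.

Definition cocompact (Gam : (H3 -> H3) -> (Sph -> Sph) -> Prop) : Prop :=
  exists K, compactH K /\ forall q, exists G g k, Gam G g /\ K k /\ G k = q.

Definition nice_lattice (Gam : (H3 -> H3) -> (Sph -> Sph) -> Prop) : Prop :=
  subgroupI Gam /\ acts_freely Gam /\ properly_discontinuous Gam /\ cocompact Gam.

Definition bilipschitz_bijection (H : H3 -> H3) : Prop :=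
  bijective H /\ exists L, 0 < L /\
    forall p q, hd p q / L <= hd (H p) (H q) /\ hd (H p) (H q) <= L * hd p q.

Definition homeomorphismS (h : Sph -> Sph) : Prop :=
  exists h', (forall z, h' (h z) = z) /\ (forall z, h (h' z) = z) /\
    continuousS h /\ continuousS h'.

(** H Gam1 H^{-1} = Gam2 (as sets of isometries of H^3) and
    h Gam1 h^{-1} = Gam2 (as sets of boundary maps); F = H G H^{-1} is
    written F o H = H o G (H bijective). *)
Definition equivariant_pair (H : H3 -> H3) (h : Sph -> Sph)
    (Gam1 Gam2 : (H3 -> H3) -> (Sph -> Sph) -> Prop) : Prop :=
  bilipschitz_bijection H /\ homeomorphismS h /\ continuousX (joinmap H h) /\
  nice_lattice Gam1 /\ nice_lattice Gam2 /\
  (forall F, (exists f, Gam2 F f) <->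
     (exists G g, Gam1 G g /\ forall p, F (H p) = H (G p))) /\
  (forall f, (exists F, Gam2 F f) <->
     (exists G g, Gam1 G g /\ forall z, f (h z) = h (g z))).

Definition derived (H : H3 -> H3) (h : Sph -> Sph)
    (Hn : nat -> H3 -> H3) (hn : nat -> Sph -> Sph) : Prop :=
  exists (fI gI : nat -> H3 -> H3) (fB gB : nat -> Sph -> Sph),
    (forall n, isom (fI n) (fB n)) /\ (forall n, isom (gI n) (gB n)) /\
    (forall n p, Hn n p = fI n (H (gI n p))) /\
    (forall n z, hn n z = fB n (h (gB n z))).

Definition tame (Hn : nat -> H3 -> H3) : Prop :=
  forall p, exists q r, forall n, hd q (Hn n p) <= r.

Definition unif_cvg_compacts (Fk : nat -> H3 -> H3) (F : H3 -> H3) : Prop :=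
  forall K, compactH K -> forall eps, 0 < eps -> exists N, forall k, (N <= k)%nat ->
    forall p, K p -> hd (Fk k p) (F p) < eps.

Definition unif_cvg_S (fk : nat -> Sph -> Sph) (f : Sph -> Sph) : Prop :=
  forall eps, 0 < eps -> exists N, forall k, (N <= k)%nat ->
    forall z, dS (fk k z) (f z) < eps.

(* Main.v *)
Require Import Defs.
From Stdlib Require Import Reals Lra List.
From Stdlib Require Import ZArith Lia Psatz Classical ClassicalEpsilon ProofIrrelevance FunctionalExtensionality Cantor.
Require Import Defs.
Open Scope R_scope.

Ltac add_sq := repeat match goal with
  | |- context [?x ^ 2] => lazymatch goal with
       | _ : 0 <= x ^ 2 |- _ => fail | _ => assert (0 <= x^2) by apply pow2_ge_0 end
  | _ : context [?x ^ 2] |- _ => lazymatch goal with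
       | _ : 0 <= x ^ 2 |- _ => fail | _ => assert (0 <= x^2) by apply pow2_ge_0 end
  end.

Lemma Rdiv_le_0_compat a b : 0 <= a -> 0 < b -> 0 <= a / b.
Proof. intros. unfold Rdiv. apply Rmult_le_pos; auto. left; apply Rinv_0_lt_compat; auto. Qed.

Definition o : H3 := mkH3 0 0 1 Rlt_0_1.

Definition ch (p q : H3) : R :=
  1 + ((hx p - hx q)^2 + (hy p - hy q)^2 + (ht p - ht q)^2) / (2 * ht p * ht q).

Lemma hd_ch p q : hd p q = arcosh (ch p q).
Proof. reflexivity. Qed.

Lemma ch_ge1 p q : 1 <= ch p q.
Proof.
  unfold ch. pose proof (ht_pos p). pose proof (ht_pos q).
  assert (0 <= ((hx p - hx q)^2 + (hy p - hy q)^2 + (ht p - ht q)^2) / (2 * ht p * ht q)).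
  { apply Rdiv_le_0_compat. add_sq; lra. apply Rmult_lt_0_compat; [apply Rmult_lt_0_compat|]; lra. }
  lra.
Qed.

Lemma ch_sym p q : ch p q = ch q p.
Proof. unfold ch. f_equal. f_equal; ring. Qed.

Lemma ch_refl p : ch p p = 1.
Proof. unfold ch. replace ((hx p - hx p)^2 + (hy p - hy p)^2 + (ht p - ht p)^2) with 0 by ring.
  unfold Rdiv; rewrite Rmult_0_l; ring. Qed.

Lemma ch_alt p q : ch p q =
  ((hx p - hx q)^2 + (hy p - hy q)^2 + ht p ^2 + ht q ^2) / (2 * ht p * ht q).
Proof. unfold ch. pose proof (ht_pos p). pose proof (ht_pos q). field. lra. Qed.

Lemma ch_tri p q r : ch p r <= 2 * ch p q * ch q r.
Proof.
  rewrite !ch_alt.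
  pose proof (ht_pos p) as Hp. pose proof (ht_pos q) as Hq. pose proof (ht_pos r) as Hr.
  set (u1 := hx p - hx q). set (u2 := hy p - hy q).
  set (v1 := hx q - hx r). set (v2 := hy q - hy r).
  replace (hx p - hx r) with (u1 + v1) by (unfold u1, v1; ring).
  replace (hy p - hy r) with (u2 + v2) by (unfold u2, v2; ring).
  set (a := ht p) in *. set (b := ht q) in *. set (c := ht r) in *.
  assert (key : ((u1+v1)^2 + (u2+v2)^2 + a^2 + c^2) * b^2 <=
     (u1^2 + u2^2 + a^2 + b^2) * (v1^2 + v2^2 + b^2 + c^2)).
  { assert (H1 : 0 <= (u1*v1 + u2*v2 - b^2)^2) by apply pow2_ge_0.
    assert (H2 : 0 <= (u1*v2 - u2*v1)^2) by apply pow2_ge_0.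
    assert (H3 : 0 <= a^2 * c^2) by (apply Rmult_le_pos; apply pow2_ge_0).
    assert (H4 : 0 <= (u1^2+u2^2) * c^2) by (apply Rmult_le_pos; add_sq; lra).
    assert (H5 : 0 <= a^2 * (v1^2+v2^2)) by (apply Rmult_le_pos; add_sq; lra).
    apply Rminus_le. 
    match goal with |- ?l - ?r <= 0 => replace (l - r) with (-((u1*v1 + u2*v2 - b^2)^2 + (u1*v2 - u2*v1)^2 + a^2 * c^2 + (u1^2+u2^2) * c^2 + a^2 * (v1^2+v2^2))) by ring end.
    lra. }
  apply (Rmult_le_reg_r (2 * a * b * b * c)). repeat apply Rmult_lt_0_compat; lra.
  replace (((u1 + v1) ^ 2 + (u2 + v2) ^ 2 + a ^ 2 + c ^ 2) / (2 * a * c) * (2 * a * b * b * c))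
    with (((u1 + v1) ^ 2 + (u2 + v2) ^ 2 + a ^ 2 + c ^ 2) * b^2) by (field; lra).
  replace (2 * ((u1 ^ 2 + u2 ^ 2 + a ^ 2 + b ^ 2) / (2 * a * b)) *
    ((v1 ^ 2 + v2 ^ 2 + b ^ 2 + c ^ 2) / (2 * b * c)) * (2 * a * b * b * c))
   with ((u1^2 + u2^2 + a^2 + b^2) * (v1^2 + v2^2 + b^2 + c^2)) by (field; lra).
  exact key.
Qed.

Lemma H3_eq p q : hx p = hx q -> hy p = hy q -> ht p = ht q -> p = q.
Proof.
  destruct p as [x y t h], q as [x' y' t' h']; simpl; intros -> -> ->.
  f_equal. apply proof_irrelevance.
Qed.

Lemma sq3_zero a b c : a^2 + b^2 + c^2 = 0 -> a = 0 /\ b = 0 /\ c = 0.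
Proof. intro H. split; [|split]; nra. Qed.

Lemma ch_eq1 p q : ch p q = 1 -> p = q.
Proof.
  unfold ch. intro E. pose proof (ht_pos p). pose proof (ht_pos q).
  assert (Z : ((hx p - hx q)^2 + (hy p - hy q)^2 + (ht p - ht q)^2) = 0).
  { assert (Z' : ((hx p - hx q)^2 + (hy p - hy q)^2 + (ht p - ht q)^2) / (2 * ht p * ht q) = 0) by lra.
    unfold Rdiv in Z'. apply Rmult_integral in Z'. destruct Z' as [Z'|Z']; auto.
    exfalso. apply Rinv_neq_0_compat in Z'; auto. nra. }
  apply sq3_zero in Z. destruct Z as (Z1&Z2&Z3). apply H3_eq; lra.
Qed.

Lemma arcosh_arg_pos u : 1 <= u -> 1 <= u + sqrt (u * u - 1).
Proof. intro. pose proof (sqrt_pos (u*u-1)). lra. Qed.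

Lemma arcosh_lt u v : 1 <= u -> u < v -> arcosh u < arcosh v.
Proof.
  intros Hu Huv. unfold arcosh. apply ln_increasing.
  pose proof (sqrt_pos (u*u-1)); lra.
  assert (sqrt (u*u-1) <= sqrt (v*v-1)) by (apply sqrt_le_1_alt; nra). lra.
Qed.

Lemma arcosh_inj u v : 1 <= u -> 1 <= v -> arcosh u = arcosh v -> u = v.
Proof.
  intros Hu Hv E. destruct (Rtotal_order u v) as [H|[H|H]]; auto.
  - pose proof (arcosh_lt u v Hu H); lra.
  - pose proof (arcosh_lt v u Hv H); lra.
Qed.

Lemma arcosh_le_mono u v : 1 <= u -> u <= v -> arcosh u <= arcosh v.
Proof. intros Hu [H|H]. left; apply arcosh_lt; auto. subst; lra. Qed.

Lemma arcosh_1 : arcosh 1 = 0.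
Proof. unfold arcosh. replace (1*1-1) with 0 by ring. rewrite sqrt_0, Rplus_0_r. apply ln_1. Qed.

Lemma arcosh_ge0 u : 1 <= u -> 0 <= arcosh u.
Proof. intro H. rewrite <- arcosh_1. apply arcosh_le_mono; lra. Qed.

Lemma ln_le_sub1 y : 0 < y -> ln y <= y - 1.
Proof. intro H. pose proof (exp_ineq1_le (ln y)). rewrite exp_ln in H0; lra. Qed.

Lemma arcosh_ge_ln u : 1 <= u -> ln u <= arcosh u.
Proof.
  intro H. unfold arcosh. pose proof (sqrt_pos (u*u-1)).
  destruct H0 as [H0|H0].
  - left. apply ln_increasing; lra.
  - rewrite <- H0, Rplus_0_r. lra.
Qed.

Lemma arcosh_upper u : 1 <= u -> arcosh u <= (u - 1) + sqrt (u * u - 1).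
Proof.
  intro H. unfold arcosh. pose proof (sqrt_pos (u*u-1)).
  pose proof (ln_le_sub1 (u + sqrt (u*u-1))). lra.
Qed.

Lemma arcosh_le_ln2 u : 1 <= u -> arcosh u <= ln (2 * u).
Proof.
  intro H. unfold arcosh. 
  assert (sqrt (u*u-1) <= u).
  { assert (sqrt (u*u-1) <= sqrt (u*u)) by (apply sqrt_le_1_alt; lra).
    rewrite sqrt_square in H0 by lra. exact H0. }
  pose proof (sqrt_pos (u*u-1)).
  destruct (Req_dec (u + sqrt (u*u-1)) (2*u)) as [E|E]. rewrite E; lra.
  left. apply ln_increasing; lra.
Qed.

Lemma ch_le_exp_hd p q : ch p q <= exp (hd p q).
Proof.
  rewrite hd_ch. pose proof (ch_ge1 p q).
  rewrite <- (exp_ln (ch p q)) at 1 by lra.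
  destruct (Req_dec (ln (ch p q)) (arcosh (ch p q))) as [E|E]. rewrite E; lra.
  left. apply exp_increasing. pose proof (arcosh_ge_ln (ch p q) H). lra.
Qed.

Lemma hd_le_ch p q : hd p q <= ln (2 * ch p q).
Proof. rewrite hd_ch. apply arcosh_le_ln2, ch_ge1. Qed.

Lemma hd_eq_ch p q p' q' : hd p q = hd p' q' -> ch p q = ch p' q'.
Proof. rewrite !hd_ch. apply arcosh_inj; apply ch_ge1. Qed.

Lemma hd_refl p : hd p p = 0.
Proof. rewrite hd_ch, ch_refl. apply arcosh_1. Qed.

Lemma hd_ge0 p q : 0 <= hd p q.
Proof. rewrite hd_ch. apply arcosh_ge0, ch_ge1. Qed.

Lemma hd_eq0 p q : hd p q = 0 -> p = q.
Proof. intro H. apply ch_eq1. apply arcosh_inj. apply ch_ge1. lra. rewrite arcosh_1. exact H. Qed.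

Lemma hd_small p q eps : 0 < eps -> eps <= 1 -> ch p q - 1 <= eps * eps / 9 -> hd p q < eps.
Proof.
  intros He He1 Hc. rewrite hd_ch. pose proof (ch_ge1 p q).
  eapply Rle_lt_trans. apply arcosh_upper; auto.
  set (s := ch p q - 1) in *.
  replace (ch p q * ch p q - 1) with (s * (s + 2)) by (unfold s; ring).
  assert (Hs : 0 <= s) by (unfold s; lra). clearbody s.
  assert (s*(s+2) <= (eps/2)^2).
  { assert (s*s <= (eps*eps/9)*(eps*eps/9)) by (apply Rmult_le_compat; lra).
    assert (eps*eps <= eps) by nra. nra. }
  assert (sqrt (s*(s+2)) <= eps/2).
  { rewrite <- (sqrt_pow2 (eps/2)) by lra. apply sqrt_le_1_alt. exact H0. }
  assert (eps*eps <= eps) by nra. lra.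
Qed.

Lemma sq_zero x : x^2 = 0 -> x = 0.
Proof. intros H; apply Rsqr_0_uniq; unfold Rsqr; rewrite <- H; ring. Qed.

Definition sq4 (u v : R * R * R * R) : R :=
  let '(a1, a2, a3, a4) := u in let '(b1, b2, b3, b4) := v in
  (a1 - b1)^2 + (a2 - b2)^2 + (a3 - b3)^2 + (a4 - b4)^2.

Lemma dist4_sq4 u v : dist4 u v = sqrt (sq4 u v).
Proof. destruct u as [[[? ?] ?] ?], v as [[[? ?] ?] ?]. reflexivity. Qed.

Lemma sq4_ge0 u v : 0 <= sq4 u v.
Proof. destruct u as [[[? ?] ?] ?], v as [[[? ?] ?] ?]. cbn [sq4]. add_sq. lra. Qed.

Lemma sq4_sym u v : sq4 u v = sq4 v u.
Proof. destruct u as [[[? ?] ?] ?], v as [[[? ?] ?] ?]. cbn [sq4]. ring. Qed.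

Lemma sq4_refl u : sq4 u u = 0.
Proof. destruct u as [[[? ?] ?] ?]. cbn [sq4]. ring. Qed.

Lemma sq4_zero u v : sq4 u v = 0 -> u = v.
Proof.
  destruct u as [[[a1 a2] a3] a4], v as [[[b1 b2] b3] b4]. cbn [sq4]. intro H.
  assert ((a1-b1)^2 = 0 /\ (a2-b2)^2 = 0 /\ (a3-b3)^2 = 0 /\ (a4-b4)^2 = 0) as (H1&H2&H3&H4)
   by (add_sq; lra).
  apply sq_zero in H1, H2, H3, H4. f_equal; [f_equal; [f_equal|]|]; lra.
Qed.

Lemma cs_aux (u1 u2 u3 u4 v1 v2 v3 v4 : R) :
  u1*v1 + u2*v2 + u3*v3 + u4*v4 <=
  sqrt (u1^2+u2^2+u3^2+u4^2) * sqrt (v1^2+v2^2+v3^2+v4^2).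
Proof.
  set (w := u1*v1 + u2*v2 + u3*v3 + u4*v4).
  destruct (Rle_or_lt w 0) as [Hw|Hw].
  - pose proof (sqrt_pos (u1^2+u2^2+u3^2+u4^2)). pose proof (sqrt_pos (v1^2+v2^2+v3^2+v4^2)).
    nra.
  - rewrite <- sqrt_mult by (add_sq; lra).
    rewrite <- (sqrt_pow2 w) by lra. apply sqrt_le_1_alt.
    assert (E : (u1^2+u2^2+u3^2+u4^2) * (v1^2+v2^2+v3^2+v4^2) - w^2 =
      (u1*v2-u2*v1)^2 + (u1*v3-u3*v1)^2 + (u1*v4-u4*v1)^2 + (u2*v3-u3*v2)^2
      + (u2*v4-u4*v2)^2 + (u3*v4-u4*v3)^2) by (unfold w; ring).
    add_sq. lra.
Qed.

Lemma dist4_tri a b c : dist4 a c <= dist4 a b + dist4 b c.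
Proof.
  rewrite !dist4_sq4.
  destruct a as [[[a1 a2] a3] a4], b as [[[b1 b2] b3] b4], c as [[[c1 c2] c3] c4]. cbn [sq4].
  set (A := (a1 - b1) ^ 2 + (a2 - b2) ^ 2 + (a3 - b3) ^ 2 + (a4 - b4) ^ 2).
  set (B := (b1 - c1) ^ 2 + (b2 - c2) ^ 2 + (b3 - c3) ^ 2 + (b4 - c4) ^ 2).
  pose proof (cs_aux (a1-b1) (a2-b2) (a3-b3) (a4-b4) (b1-c1) (b2-c2) (b3-c3) (b4-c4)) as Hc.
  fold A B in Hc.
  assert (HA : 0 <= A) by (unfold A; add_sq; lra).
  assert (HB : 0 <= B) by (unfold B; add_sq; lra).
  pose proof (sqrt_pos A). pose proof (sqrt_pos B).
  rewrite <- (sqrt_pow2 (sqrt A + sqrt B)) by lra.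
  apply sqrt_le_1_alt.
  replace ((sqrt A + sqrt B)^2) with (sqrt A * sqrt A + sqrt B * sqrt B + 2 * (sqrt A * sqrt B)) by ring.
  rewrite !sqrt_sqrt by auto.
  unfold A, B. 
  replace ((a1 - c1) ^ 2 + (a2 - c2) ^ 2 + (a3 - c3) ^ 2 + (a4 - c4) ^ 2) with
    (((a1 - b1) ^ 2 + (a2 - b2) ^ 2 + (a3 - b3) ^ 2 + (a4 - b4) ^ 2) +
     ((b1 - c1) ^ 2 + (b2 - c2) ^ 2 + (b3 - c3) ^ 2 + (b4 - c4) ^ 2) +
     2 * ((a1-b1)*(b1-c1) + (a2-b2)*(b2-c2) + (a3-b3)*(b3-c3) + (a4-b4)*(b4-c4))) by ring.
  fold A B. lra.
Qed.

Lemma dX_sym a b : dX a b = dX b a.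
Proof. unfold dX. rewrite !dist4_sq4, sq4_sym. reflexivity. Qed.

Lemma dX_refl a : dX a a = 0.
Proof. unfold dX. rewrite dist4_sq4, sq4_refl. apply sqrt_0. Qed.

Lemma dX_ge0 a b : 0 <= dX a b.
Proof. unfold dX. rewrite dist4_sq4. apply sqrt_pos. Qed.

Lemma dX_tri a b c : dX a c <= dX a b + dX b c.
Proof. apply dist4_tri. Qed.

Lemma dX_sq a b : dX a b ^ 2 = sq4 (embX a) (embX b).
Proof. unfold dX. rewrite dist4_sq4. rewrite <- Rsqr_pow2. apply Rsqr_sqrt, sq4_ge0. Qed.

Lemma sq4_stereo x y t x' y' t' :
  sq4 (stereo x y t) (stereo x' y' t') =
  4 * ((x-x')^2 + (y-y')^2 + (t-t')^2) / ((x^2+y^2+t^2+1) * (x'^2+y'^2+t'^2+1)).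
Proof.
  cbn [stereo sq4].
  assert (0 < x^2+y^2+t^2+1) by (add_sq; lra).
  assert (0 < x'^2+y'^2+t'^2+1) by (add_sq; lra).
  field. lra.
Qed.

Lemma sq4_stereo_inf x y t :
  sq4 (stereo x y t) (0,0,0,1) = 4 / (x^2+y^2+t^2+1).
Proof.
  cbn [stereo sq4].
  assert (0 < x^2+y^2+t^2+1) by (add_sq; lra).
  field. lra.
Qed.

Lemma ch_o p : ch o p = (hx p ^2 + hy p ^2 + ht p ^2 + 1) / (2 * ht p).
Proof. rewrite ch_alt. simpl. pose proof (ht_pos p). field. lra. Qed.

Lemma ch_o_pos p : 0 < ch o p.
Proof. pose proof (ch_ge1 o p). lra. Qed.

Lemma dX_inl_sq p q : dX (inl p) (inl q) ^ 2 = 2 * (ch p q - 1) / (ch o p * ch o q).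
Proof.
  rewrite dX_sq. simpl embX. rewrite sq4_stereo, !ch_o. unfold ch.
  pose proof (ht_pos p). pose proof (ht_pos q).
  assert (0 < hx p ^2 + hy p ^2 + ht p ^2 + 1) by (add_sq; lra).
  assert (0 < hx q ^2 + hy q ^2 + ht q ^2 + 1) by (add_sq; lra).
  field. repeat split; lra.
Qed.

Definition E3 (a : X) : R := let '(_, _, c, _) := embX a in c.

Lemma E3_inl p : E3 (inl p) = / ch o p.
Proof.
  unfold E3. cbn [embX stereo]. rewrite ch_o. pose proof (ht_pos p).
  assert (0 < hx p ^2 + hy p ^2 + ht p ^2 + 1) by (add_sq; lra). field. lra.
Qed.

Lemma E3_inr z : E3 (inr z) = 0.
Proof.
  destruct z; unfold E3; cbn [embX stereo]; [|reflexivity].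
  unfold Rdiv. ring.
Qed.

Lemma E3_inl_pos p : 0 < E3 (inl p).
Proof. rewrite E3_inl. apply Rinv_0_lt_compat, ch_o_pos. Qed.

Lemma le_of_sq a c : 0 <= a -> 0 <= c -> a^2 <= c^2 -> a <= c.
Proof. intros. nra. Qed.

Lemma lt_of_sq a c : 0 <= a -> 0 <= c -> a^2 < c^2 -> a < c.
Proof. intros. nra. Qed.

Lemma E3_lip a b : Rabs (E3 a - E3 b) <= dX a b.
Proof.
  apply le_of_sq. apply Rabs_pos. apply dX_ge0.
  rewrite dX_sq, pow2_abs. unfold E3.
  destruct (embX a) as [[[a1 a2] a3] a4], (embX b) as [[[b1 b2] b3] b4]. cbn [sq4].
  add_sq. lra.
Qed.

Lemma stereo_inj x y t x' y' t' : stereo x y t = stereo x' y' t' -> x = x' /\ y = y' /\ t = t'.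
Proof.
  intro E. assert (H : sq4 (stereo x y t) (stereo x' y' t') = 0) by (rewrite E; apply sq4_refl).
  rewrite sq4_stereo in H.
  assert (0 < x^2+y^2+t^2+1) by (add_sq; lra).
  assert (0 < x'^2+y'^2+t'^2+1) by (add_sq; lra).
  assert (H' : (x-x')^2 + (y-y')^2 + (t-t')^2 = 0).
  { unfold Rdiv in H. apply Rmult_integral in H. destruct H as [H|H].
    - lra.
    - exfalso. revert H. apply Rinv_neq_0_compat. apply Rgt_not_eq. apply Rmult_lt_0_compat; lra. }
  apply sq3_zero in H'. lra.
Qed.

Lemma stereo_not_inf x y t : stereo x y t <> (0,0,0,1).
Proof.
  intro E. assert (H : sq4 (stereo x y t) (0,0,0,1) = 0) by (rewrite E; apply sq4_refl).
  rewrite sq4_stereo_inf in H. assert (0 < x^2+y^2+t^2+1) by (add_sq; lra).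
  unfold Rdiv in H. apply Rmult_integral in H. destruct H as [H|H]. lra.
  revert H. apply Rinv_neq_0_compat. lra.
Qed.

Lemma embX_inj a b : embX a = embX b -> a = b.
Proof.
  destruct a as [p|[x y|]], b as [q|[x' y'|]]; cbn [embX]; intro E.
  - apply stereo_inj in E. destruct E as (?&?&?). f_equal. apply H3_eq; auto.
  - apply stereo_inj in E. pose proof (ht_pos p). lra.
  - exfalso. eapply stereo_not_inf; eauto.
  - apply stereo_inj in E. pose proof (ht_pos q). lra.
  - apply stereo_inj in E. destruct E as (->&->&_). reflexivity.
  - exfalso. eapply stereo_not_inf; eauto.
  - exfalso. eapply stereo_not_inf; eauto.
  - exfalso. eapply stereo_not_inf; eauto.
  - reflexivity.
Qed.

Lemma dX_eq0 a b : dX a b = 0 -> a = b.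
Proof.
  intro H. apply embX_inj. apply sq4_zero. rewrite <- dX_sq, H. ring.
Qed.

Lemma dX_fin_le p : dX (inl p) (inr (Fin (hx p) (hy p))) <= 2 * ht p.
Proof.
  pose proof (ht_pos p). apply le_of_sq. apply dX_ge0. lra.
  rewrite dX_sq. cbn [embX]. rewrite sq4_stereo.
  assert (1 <= hx p ^2 + hy p ^2 + ht p ^2 + 1) by (add_sq; lra).
  assert (1 <= hx p ^2 + hy p ^2 + 0 ^2 + 1) by (add_sq; lra).
  replace ((hx p - hx p) ^ 2 + (hy p - hy p) ^ 2 + (ht p - 0) ^ 2) with (ht p ^2) by ring.
  apply (Rmult_le_reg_r ((hx p ^ 2 + hy p ^ 2 + ht p ^ 2 + 1) * (hx p ^ 2 + hy p ^ 2 + 0 ^ 2 + 1))).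
  nra. unfold Rdiv. rewrite Rmult_assoc, Rinv_l by nra. 
  assert (0 <= ht p ^2) by apply pow2_ge_0. nra.
Qed.

Lemma dX_inf_le p : dX (inl p) (inr Inf) <= 2 / ht p.
Proof.
  pose proof (ht_pos p). apply le_of_sq. apply dX_ge0. 
  apply Rlt_le, Rdiv_lt_0_compat; lra.
  rewrite dX_sq. cbn [embX]. rewrite sq4_stereo_inf.
  assert (ht p ^2 <= hx p ^2 + hy p ^2 + ht p ^2 + 1) by (add_sq; lra).
  unfold Rdiv. rewrite Rpow_mult_distr, pow_inv.
  assert (0 < ht p ^ 2) by (apply pow_lt; lra).
  replace (2^2) with 4 by ring. apply Rmult_le_compat_l. lra.
  apply Rinv_le_contravar; lra.
Qed.

Lemma dX_inl_coord p q :
  dX (inl p) (inl q) ^2 <= 4 * ((hx p - hx q)^2 + (hy p - hy q)^2 + (ht p - ht q)^2).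
Proof.
  rewrite dX_sq. cbn [embX]. rewrite sq4_stereo.
  assert (1 <= hx p ^2 + hy p ^2 + ht p ^2 + 1) by (add_sq; lra).
  assert (1 <= hx q ^2 + hy q ^2 + ht q ^2 + 1) by (add_sq; lra).
  set (N := (hx p - hx q)^2 + (hy p - hy q)^2 + (ht p - ht q)^2).
  assert (0 <= N) by (unfold N; add_sq; lra). clearbody N.
  set (A := hx p ^2 + hy p ^2 + ht p ^2 + 1) in *. set (B := hx q ^2 + hy q ^2 + ht q ^2 + 1) in *.
  clearbody A B.
  unfold Rdiv. 
  assert (0 < / (A * B) <= 1).
  { split. apply Rinv_0_lt_compat; nra. rewrite <- Rinv_1. apply Rinv_le_contravar; nra. }
  nra.
Qed.

Definition mkpt (x y t : R) (h : 0 < t) : H3 := mkH3 x y t h.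

Lemma dense_inl (a : X) (d : R) : 0 < d -> exists p, dX a (inl p) < d.
Proof.
  intro Hd. destruct a as [p|[x y|]].
  - exists p. rewrite dX_refl. auto.
  - assert (Ht : 0 < d / 4) by lra. exists (mkH3 x y (d/4) Ht).
    rewrite dX_sym. eapply Rle_lt_trans. apply (dX_fin_le (mkH3 x y (d/4) Ht)). simpl. lra.
  - assert (Ht : 0 < 4 / d) by (apply Rdiv_lt_0_compat; lra). exists (mkH3 0 0 (4/d) Ht).
    rewrite dX_sym. eapply Rle_lt_trans. apply (dX_inf_le (mkH3 0 0 (4/d) Ht)). simpl.
    replace (2 / (4/d)) with (d/2) by (field; lra). lra.
Qed.


Definition c1 (w : R*R*R*R) := fst (fst (fst w)).
Definition c2 (w : R*R*R*R) := snd (fst (fst w)).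
Definition c3 (w : R*R*R*R) := snd (fst w).
Definition c4 (w : R*R*R*R) := snd w.

Lemma sq4_c u v : sq4 u v = (c1 u - c1 v)^2 + (c2 u - c2 v)^2 + (c3 u - c3 v)^2 + (c4 u - c4 v)^2.
Proof. destruct u as [[[? ?] ?] ?], v as [[[? ?] ?] ?]. reflexivity. Qed.

Lemma E3_c3 a : E3 a = c3 (embX a).
Proof. unfold E3. destruct (embX a) as [[[? ?] ?] ?]. reflexivity. Qed.

Lemma embX_sphere a : (c1 (embX a))^2 + (c2 (embX a))^2 + (c3 (embX a))^2 + (c4 (embX a))^2 = 1
   /\ 0 <= c3 (embX a).
Proof.
  assert (Hs : forall x y t, 0 <= t -> (c1 (stereo x y t))^2 + (c2 (stereo x y t))^2 + (c3 (stereo x y t))^2 + (c4 (stereo x y t))^2 = 1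
      /\ 0 <= c3 (stereo x y t)).
  { intros x y t Ht. unfold stereo, c1, c2, c3, c4; cbn [fst snd].
    assert (0 < x^2+y^2+t^2+1) by (add_sq; lra). split. field. lra.
    apply Rdiv_le_0_compat; lra. }
  destruct a as [p|[x y|]]; cbn [embX].
  - apply Hs. pose proof (ht_pos p); lra.
  - apply Hs. lra.
  - unfold c1, c2, c3, c4; cbn [fst snd]. split; [ring | lra].
Qed.

Lemma hemi_surj w1 w2 w3 w4 : w1^2+w2^2+w3^2+w4^2 = 1 -> 0 <= w3 ->
  exists a, embX a = (w1, w2, w3, w4).
Proof.
  intros Hs H3.
  destruct (Req_dec w4 1) as [E|E].
  - subst w4. exists (inr Inf). cbn [embX].
    assert (w1^2+w2^2+w3^2 = 0) by lra. apply sq3_zero in H. destruct H as (->&->&->). reflexivity.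
  - assert (w4 < 1).
    { destruct (Rlt_or_le w4 1); auto. exfalso. add_sq. assert (w4^2 <= 1) by lra. nra. }
    set (x := w1 / (1 - w4)). set (y := w2/(1-w4)). set (t := w3/(1-w4)).
    assert (Hn : x^2+y^2+t^2 = (1+w4)/(1-w4)).
    { unfold x,y,t. replace ((w1 / (1 - w4)) ^ 2 + (w2 / (1 - w4)) ^ 2 + (w3 / (1 - w4)) ^ 2)
        with ((w1^2+w2^2+w3^2) / (1-w4)^2) by (field; lra).
      replace (w1^2+w2^2+w3^2) with ((1-w4)*(1+w4)) by lra. field. lra. }
    assert (Hst : stereo x y t = (w1, w2, w3, w4)).
    { unfold stereo. rewrite Hn. unfold x, y, t. f_equal; [f_equal; [f_equal|]|]; field; lra. }
    destruct H3 as [H3|H3].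
    + assert (Ht : 0 < t) by (unfold t; apply Rdiv_lt_0_compat; lra).
      exists (inl (mkH3 x y t Ht)). cbn [embX]. simpl hx. simpl hy. simpl ht. exact Hst.
    + exists (inr (Fin x y)). cbn [embX].
      replace 0 with t by (unfold t; rewrite <- H3; unfold Rdiv; ring). exact Hst.
Qed.

Lemma abs_le_inv x B : Rabs x <= B -> -B <= x <= B.
Proof. unfold Rabs. destruct (Rcase_abs x); lra. Qed.

Lemma sq_lt_compat a b : 0 <= a -> a < b -> a^2 < b^2.
Proof. intros. nra. Qed.

Definition incr (phi : nat -> nat) := forall k, (phi k < phi (S k))%nat.

Lemma incr_lt phi : incr phi -> forall m n, (m < n)%nat -> (phi m < phi n)%nat.
Proof.
  intros H m n Hmn. induction Hmn. apply H. specialize (H m0). lia.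
Qed.

Lemma incr_le phi : incr phi -> forall m n, (m <= n)%nat -> (phi m <= phi n)%nat.
Proof. intros H m n Hmn. destruct (Nat.eq_dec m n). subst; lia. pose proof (incr_lt phi H m n). lia. Qed.

Lemma incr_ge phi : incr phi -> forall k, (k <= phi k)%nat.
Proof. intros H k. induction k. lia. specialize (H k). lia. Qed.

Lemma incr_comp phi psi : incr phi -> incr psi -> incr (fun k => phi (psi k)).
Proof. intros H1 H2 k. apply incr_lt; auto. Qed.

Lemma incr_id : incr (fun k => k).
Proof. intro; lia. Qed.

Lemma cv_sub (v : nat -> R) l phi : Un_cv v l -> incr phi -> Un_cv (fun k => v (phi k)) l.
Proof.
  intros H Hp e He. destruct (H e He) as [N HN]. exists N. intros n Hn. apply HN.
  pose proof (incr_ge phi Hp n). lia.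
Qed.

Lemma BW_R (v : nat -> R) (B : R) : (forall n, Rabs (v n) <= B) ->
  exists phi l, incr phi /\ Un_cv (fun k => v (phi k)) l.
Proof.
  intro HB.
  destruct (Bolzano_Weierstrass v (fun c => -B <= c <= B) (compact_P3 (-B) B)) as [l Hl].
  { intro n. specialize (HB n). apply abs_le_inv in HB. lra. }
  assert (G : forall N k, exists p, (N <= p)%nat /\ Rabs (v p - l) < / INR (S k)).
  { intros N k. 
    assert (Hpos : 0 < / INR (S k)) by (apply Rinv_0_lt_compat, lt_0_INR; lia).
    destruct (Hl (disc l (mkposreal _ Hpos)) N) as [p [Hp1 Hp2]].
    - exists (mkposreal _ Hpos). intros y Hy. exact Hy.
    - exists p. split; auto. }
  set (g := fun N k => epsilon (inhabits 0%nat) (fun p => (N <= p)%nat /\ Rabs (v p - l) < / INR (S k))).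
  assert (Hg : forall N k, (N <= g N k)%nat /\ Rabs (v (g N k) - l) < / INR (S k)).
  { intros N k. unfold g. apply (epsilon_spec (inhabits 0%nat) (fun p => (N <= p)%nat /\ Rabs (v p - l) < / INR (S k))). apply G. }
  set (phi := fix phi k := match k with 0 => g 0%nat 0%nat | S k' => g (S (phi k')) k end).
  exists phi, l. split.
  - intro k. simpl. destruct (Hg (S (phi k)) (S k)). lia.
  - intros e He.
    destruct (archimed (/ e)) as [Ha _].
    assert (Hup : (0 <= up (/ e))%Z).
    { apply le_IZR. pose proof (Rinv_0_lt_compat e He). simpl. lra. }
    exists (Z.to_nat (up (/ e))). intros n Hn.
    assert (Hphi : Rabs (v (phi n) - l) < / INR (S n)).
    { destruct n; simpl; apply Hg. }
    unfold R_dist. eapply Rlt_le_trans. apply Hphi.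
    assert (INR (Z.to_nat (up (/ e))) <= INR n) by (apply le_INR; lia).
    rewrite INR_IZR_INZ, Z2Nat.id in H by auto.
    rewrite <- (Rinv_inv e). apply Rinv_le_contravar. apply Rinv_0_lt_compat; auto.
    rewrite S_INR. lra.
Qed.

Definition cvX (u : nat -> X) (l : X) := forall e, 0 < e -> exists N, forall n, (N <= n)%nat -> dX (u n) l < e.

Lemma cvX_sub u l phi : cvX u l -> incr phi -> cvX (fun k => u (phi k)) l.
Proof.
  intros H Hp e He. destruct (H e He) as [N HN]. exists N. intros n Hn. apply HN.
  pose proof (incr_ge phi Hp n). lia.
Qed.

Lemma c_bound a : forall f, (f = c1 \/ f = c2 \/ f = c3 \/ f = c4) -> Rabs (f (embX a)) <= 1.
Proof.
  intros f Hf. destruct (embX_sphere a) as [Hs _].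
  apply le_of_sq. apply Rabs_pos. lra. rewrite pow2_abs. add_sq.
  destruct Hf as [->|[->|[->| ->]]]; lra.
Qed.

Lemma Un_cv_nonneg (v : nat -> R) l : Un_cv v l -> (forall n, 0 <= v n) -> 0 <= l.
Proof.
  intros H Hn. destruct (Rle_or_lt 0 l); auto. exfalso.
  destruct (H (-l)) as [N HN]. lra. specialize (HN N (le_n N)). unfold R_dist in HN.
  specialize (Hn N). apply Rabs_def2 in HN. lra.
Qed.

Lemma cv_sq (v : nat -> R) l : Un_cv v l -> Un_cv (fun n => v n ^ 2) (l^2).
Proof. intro H. pose proof (CV_mult _ _ _ _ H H) as H0. intros e He. destruct (H0 e He) as [N HN].
  exists N. intros n Hn. replace (v n ^2) with (v n * v n) by ring. replace (l^2) with (l*l) by ring. apply HN; auto. Qed.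

Lemma sq4_tuple a w1 w2 w3 w4 : sq4 a (w1,w2,w3,w4) = (c1 a - w1)^2 + (c2 a - w2)^2 + (c3 a - w3)^2 + (c4 a - w4)^2.
Proof. destruct a as [[[? ?] ?] ?]. reflexivity. Qed.

Lemma X_compact (u : nat -> X) : exists phi l, incr phi /\ cvX (fun k => u (phi k)) l.
Proof.
  destruct (BW_R (fun n => c1 (embX (u n))) 1) as [p1 [w1 [Hp1 H1]]].
  { intro n. apply c_bound; auto. }
  destruct (BW_R (fun n => c2 (embX (u (p1 n)))) 1) as [p2 [w2 [Hp2 H2]]].
  { intro n. apply c_bound; auto. }
  destruct (BW_R (fun n => c3 (embX (u (p1 (p2 n))))) 1) as [p3 [w3 [Hp3 H3]]].
  { intro n. apply c_bound; auto. }
  destruct (BW_R (fun n => c4 (embX (u (p1 (p2 (p3 n)))))) 1) as [p4 [w4 [Hp4 H4]]].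
  { intro n. apply c_bound; auto. }
  set (psi := fun k => p1 (p2 (p3 (p4 k)))).
  assert (Hpsi : incr psi) by (unfold psi; apply incr_comp; [auto|apply incr_comp; [auto|apply incr_comp; auto]]).
  assert (G1 : Un_cv (fun k => c1 (embX (u (psi k)))) w1).
  { apply (cv_sub (fun k => c1 (embX (u (p1 k)))) w1 (fun k => p2 (p3 (p4 k)))); auto.
    apply incr_comp; [auto|apply incr_comp; auto]. }
  assert (G2 : Un_cv (fun k => c2 (embX (u (psi k)))) w2).
  { apply (cv_sub (fun k => c2 (embX (u (p1 (p2 k))))) w2 (fun k => (p3 (p4 k)))); auto.
    apply incr_comp; auto. }
  assert (G3 : Un_cv (fun k => c3 (embX (u (psi k)))) w3).
  { apply (cv_sub (fun k => c3 (embX (u (p1 (p2 (p3 k)))))) w3 p4); auto. }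
  assert (G4 : Un_cv (fun k => c4 (embX (u (psi k)))) w4) by exact H4.
  assert (Hsum : w1^2+w2^2+w3^2+w4^2 = 1).
  { assert (Hc : Un_cv (fun k => (c1 (embX (u (psi k))))^2 + (c2 (embX (u (psi k))))^2
        + (c3 (embX (u (psi k))))^2 + (c4 (embX (u (psi k))))^2) (w1^2+w2^2+w3^2+w4^2)).
    { repeat apply CV_plus; apply cv_sq; auto. }
    assert (Hc1 : Un_cv (fun k => (c1 (embX (u (psi k))))^2 + (c2 (embX (u (psi k))))^2
        + (c3 (embX (u (psi k))))^2 + (c4 (embX (u (psi k))))^2) 1).
    { intros e He; exists 0%nat; intros; unfold R_dist. rewrite (proj1 (embX_sphere _)).
      rewrite Rminus_eq_0, Rabs_R0; auto. }
    eapply UL_sequence; eauto. }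
  assert (Hw3 : 0 <= w3).
  { apply (Un_cv_nonneg _ _ G3). intro n. apply embX_sphere. }
  destruct (hemi_surj w1 w2 w3 w4 Hsum Hw3) as [l Hl].
  exists psi, l. split; auto.
  intros e He.
  assert (He4 : 0 < e / 4) by lra.
  destruct (G1 _ He4) as [N1 HN1]. destruct (G2 _ He4) as [N2 HN2].
  destruct (G3 _ He4) as [N3 HN3]. destruct (G4 _ He4) as [N4 HN4].
  exists (N1 + N2 + N3 + N4)%nat. intros n Hn.
  specialize (HN1 n ltac:(lia)). specialize (HN2 n ltac:(lia)).
  specialize (HN3 n ltac:(lia)). specialize (HN4 n ltac:(lia)).
  unfold R_dist in *.
  apply lt_of_sq. apply dX_ge0. lra. rewrite dX_sq, Hl, sq4_tuple.
  set (d1 := c1 (embX (u (psi n))) - w1) in *. set (d2 := c2 (embX (u (psi n))) - w2) in *.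
  set (d3 := c3 (embX (u (psi n))) - w3) in *. set (d4 := c4 (embX (u (psi n))) - w4) in *.
  clearbody d1 d2 d3 d4.
  rewrite <- (pow2_abs d1), <- (pow2_abs d2), <- (pow2_abs d3), <- (pow2_abs d4).
  pose proof (Rabs_pos d1). pose proof (Rabs_pos d2). pose proof (Rabs_pos d3). pose proof (Rabs_pos d4).
  assert (Rabs d1 ^2 < (e/4)^2) by (apply sq_lt_compat; lra).
  assert (Rabs d2 ^2 < (e/4)^2) by (apply sq_lt_compat; lra).
  assert (Rabs d3 ^2 < (e/4)^2) by (apply sq_lt_compat; lra).
  assert (Rabs d4 ^2 < (e/4)^2) by (apply sq_lt_compat; lra).
  assert ((e/4)^2 = e^2/16) by field. assert (0 < e^2) by (apply pow_lt; lra). lra.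
Qed.

Lemma cvX_unique u l l' : cvX u l -> cvX u l' -> l = l'.
Proof.
  intros H H'. apply dX_eq0. destruct (Rle_lt_or_eq_dec 0 (dX l l') (dX_ge0 _ _)) as [Hp|Hz]; auto.
  exfalso. assert (He : 0 < dX l l' / 2) by lra.
  destruct (H _ He) as [N HN]. destruct (H' _ He) as [N' HN'].
  specialize (HN (N+N')%nat ltac:(lia)). specialize (HN' (N+N')%nat ltac:(lia)).
  pose proof (dX_tri l (u (N+N')%nat) l'). rewrite (dX_sym l (u (N+N')%nat)) in H0. lra.
Qed.

Lemma X_complete (u : nat -> X) :
  (forall e, 0 < e -> exists N, forall m n, (N <= m)%nat -> (N <= n)%nat -> dX (u m) (u n) < e) ->
  exists l, cvX u l.
Proof.
  intro Hc. destruct (X_compact u) as [phi [l [Hp Hl]]]. exists l.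
  intros e He. assert (He2 : 0 < e/2) by lra.
  destruct (Hc _ He2) as [N HN]. destruct (Hl _ He2) as [N' HN'].
  exists (N + N')%nat. intros n Hn.
  specialize (HN' (N+N')%nat ltac:(lia)).
  pose proof (incr_ge phi Hp (N+N')%nat).
  specialize (HN n (phi (N+N')%nat) ltac:(lia) ltac:(lia)).
  pose proof (dX_tri (u n) (u (phi (N+N')%nat)) l). lra.
Qed.

Lemma inv_Sn_small e : 0 < e -> exists N, forall n, (N <= n)%nat -> / INR (S n) < e.
Proof.
  intros He. destruct (archimed (/ e)) as [Ha _].
  assert (Hup : (0 <= up (/ e))%Z).
  { apply le_IZR. pose proof (Rinv_0_lt_compat e He). simpl. lra. }
  exists (Z.to_nat (up (/ e))). intros n Hn.
  assert (INR (Z.to_nat (up (/ e))) <= INR n) by (apply le_INR; lia).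
  rewrite INR_IZR_INZ, Z2Nat.id in H by auto.
  rewrite <- (Rinv_inv e). apply Rinv_lt_contravar. 
  apply Rmult_lt_0_compat. apply Rinv_0_lt_compat; auto. apply lt_0_INR; lia.
  rewrite S_INR. lra.
Qed.

Lemma inv_Sn_pos n : 0 < / INR (S n).
Proof. apply Rinv_0_lt_compat, lt_0_INR; lia. Qed.

Lemma unif_cont (J : X -> X) : continuousX J ->
  forall e, 0 < e -> exists d, 0 < d /\ forall a b, dX a b < d -> dX (J a) (J b) < e.
Proof.
  intros HJ e He. apply NNPP. intro Hn.
  assert (Hs : forall n : nat, exists ab : X * X, dX (fst ab) (snd ab) < / INR (S n) /\ e <= dX (J (fst ab)) (J (snd ab))).
  { intro n. apply NNPP. intro Hn2. apply Hn. exists (/ INR (S n)). split. apply inv_Sn_pos.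
    intros a b Hab. apply Rnot_le_lt. intro Hle. apply Hn2. exists (a,b). simpl. auto. }
  destruct (choice _ Hs) as [g Hg].
  destruct (X_compact (fun n => fst (g n))) as [phi [l [Hp Hl]]].
  destruct (HJ l (e/2) ltac:(lra)) as [d [Hd Hdd]].
  assert (Hd2 : 0 < d/2) by lra.
  destruct (Hl _ Hd2) as [N1 HN1]. destruct (inv_Sn_small _ Hd2) as [N2 HN2].
  set (k := (N1 + N2)%nat).
  specialize (HN1 k ltac:(unfold k; lia)). cbv beta in HN1.
  pose proof (incr_ge phi Hp k).
  specialize (HN2 (phi k) ltac:(unfold k in *; lia)).
  destruct (Hg (phi k)) as [G1 G2].
  assert (A0 : dX l (fst (g (phi k))) < d/2) by (rewrite dX_sym; lra).
  assert (A1 : dX l (fst (g (phi k))) < d) by lra.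
  assert (A2 : dX l (snd (g (phi k))) < d).
  { pose proof (dX_tri l (fst (g (phi k))) (snd (g (phi k)))). lra. }
  pose proof (Hdd _ A1). pose proof (Hdd _ A2).
  pose proof (dX_tri (J (fst (g (phi k)))) (J l) (J (snd (g (phi k))))).
  rewrite (dX_sym (J (fst (g (phi k)))) (J l)) in H2. lra.
Qed.

Lemma INR_toZ z : INR (Z.to_nat z) - INR (Z.to_nat (- z)) = IZR z.
Proof.
  rewrite !INR_IZR_INZ, !ZifyInst.of_nat_to_nat_eq, <- minus_IZR. f_equal. lia.
Qed.

Definition gridpt (m a1 a2 b1 b2 c : nat) : H3.
Proof.
  refine (mkH3 ((INR a1 - INR a2) / INR (S m)) ((INR b1 - INR b2) / INR (S m))
     ((INR c + 1) / INR (S m)) _).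
  apply Rdiv_lt_0_compat. pose proof (pos_INR c); lra. apply lt_0_INR; lia.
Defined.

Definition dseq (n : nat) : X :=
  let '(m, r1) := of_nat n in let '(a1, r2) := of_nat r1 in let '(a2, r3) := of_nat r2 in
  let '(b1, r4) := of_nat r3 in let '(b2, c) := of_nat r4 in inl (gridpt m a1 a2 b1 b2 c).

Lemma dseq_hit m a1 a2 b1 b2 c :
  dseq (to_nat (m, to_nat (a1, to_nat (a2, to_nat (b1, to_nat (b2, c)))))) = inl (gridpt m a1 a2 b1 b2 c).
Proof. unfold dseq. rewrite !cancel_of_to. reflexivity. Qed.

Lemma approx_int (r M : R) : 0 < M -> exists a1 a2 : nat, Rabs (r - (INR a1 - INR a2) / M) <= / M.
Proof.
  intro HM. destruct (archimed (r * M)) as [H1 H2].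
  exists (Z.to_nat (up (r*M))), (Z.to_nat (- up (r*M))). rewrite INR_toZ.
  replace (r - IZR (up (r * M)) / M) with (- ((IZR (up (r*M)) - r*M) / M)) by (field; lra).
  rewrite Rabs_Ropp, Rabs_pos_eq. unfold Rdiv. rewrite <- (Rmult_1_l (/ M)) at 2.
  apply Rmult_le_compat_r. left; apply Rinv_0_lt_compat; auto. lra.
  apply Rdiv_le_0_compat; lra.
Qed.

Lemma approx_pos (r M : R) : 0 < M -> 0 < r -> exists c : nat, Rabs (r - (INR c + 1) / M) <= / M.
Proof.
  intros HM Hr. destruct (archimed (r * M)) as [H1 H2].
  assert (Hz : (1 <= up (r*M))%Z). { apply le_IZR. assert (0 < r*M) by nra.
    assert (0 < IZR (up (r*M))) by lra. apply lt_IZR in H0. apply IZR_le. lia. }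
  exists (Z.to_nat (up (r*M)) - 1)%nat.
  rewrite minus_INR by lia. rewrite INR_IZR_INZ, Z2Nat.id by lia. simpl (INR 1).
  replace (IZR (up (r * M)) - 1 + 1) with (IZR (up (r * M))) by ring.
  replace (r - IZR (up (r * M)) / M) with (- ((IZR (up (r*M)) - r*M) / M)) by (field; lra).
  rewrite Rabs_Ropp, Rabs_pos_eq. unfold Rdiv. rewrite <- (Rmult_1_l (/ M)) at 2.
  apply Rmult_le_compat_r. left; apply Rinv_0_lt_compat; auto. lra.
  apply Rdiv_le_0_compat; lra.
Qed.

Lemma abs_sq_le x B : Rabs x <= B -> x^2 <= B^2.
Proof. intro H. rewrite <- pow2_abs. pose proof (Rabs_pos x). apply pow_incr. lra. Qed.

Lemma dseq_dense (a : X) (d : R) : 0 < d -> exists i, dX a (dseq i) < d.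
Proof.
  intro Hd. destruct (dense_inl a (d/2) ltac:(lra)) as [p Hp].
  destruct (inv_Sn_small (d/8) ltac:(lra)) as [m0 Hm0]. specialize (Hm0 m0 (le_n _)).
  set (M := INR (S m0)) in *. assert (HM : 0 < M) by (apply lt_0_INR; lia).
  destruct (approx_int (hx p) M HM) as [a1 [a2 Ha]].
  destruct (approx_int (hy p) M HM) as [b1 [b2 Hb]].
  destruct (approx_pos (ht p) M HM (ht_pos p)) as [c Hc].
  exists (to_nat (m0, to_nat (a1, to_nat (a2, to_nat (b1, to_nat (b2, c)))))).
  rewrite dseq_hit.
  assert (Hq : dX (inl p) (inl (gridpt m0 a1 a2 b1 b2 c)) < d/2).
  { apply lt_of_sq. apply dX_ge0. lra.
    eapply Rle_lt_trans. apply dX_inl_coord. cbn [gridpt hx hy ht]. fold M.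
    apply abs_sq_le in Ha, Hb, Hc.
    assert (0 < / M) by (apply Rinv_0_lt_compat; auto).
    assert ((/ M)^2 < (d/8)^2) by (apply sq_lt_compat; lra).
    assert ((d/8)^2 = (d/2)^2/16) by field. 
    assert (0 < (d/2)^2) by (apply pow_lt; lra).
    lra. }
  pose proof (dX_tri a (inl p) (inl (gridpt m0 a1 a2 b1 b2 c))). lra.
Qed.

Lemma totally_bounded e : 0 < e -> exists N, forall a, exists i, (i < N)%nat /\ dX a (dseq i) < e.
Proof.
  intro He. apply NNPP. intro Hn.
  assert (Hs : forall N, exists a, forall i, (i < N)%nat -> e <= dX a (dseq i)).
  { intro N. apply NNPP. intro H1. apply Hn. exists N. intro a. apply NNPP. intro H2. apply H1.
    exists a. intros i Hi. apply Rnot_lt_le. intro H3. apply H2. exists i. auto. }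
  destruct (choice _ Hs) as [g Hg].
  destruct (X_compact g) as [phi [l [Hp Hl]]].
  destruct (dseq_dense l (e/2) ltac:(lra)) as [j Hj].
  destruct (Hl (e/2) ltac:(lra)) as [N HN].
  specialize (HN (N + S j)%nat ltac:(lia)).
  pose proof (incr_ge phi Hp (N + S j)%nat).
  specialize (Hg (phi (N + S j)%nat) j ltac:(lia)).
  pose proof (dX_tri (g (phi (N + S j)%nat)) l (dseq j)). lra.
Qed.

Ltac lra' := repeat match goal with x := _ |- _ => clearbody x end; lra.

Definition Pcv (g : nat -> X) := exists l, cvX g l.

Lemma le_eps x y : (forall h, 0 < h -> x <= y + h) -> x <= y.
Proof.
  intro H. destruct (Rle_or_lt x y); auto. specialize (H ((x - y)/2) ltac:(lra)). lra.
Qed.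


Lemma AA (f : nat -> X -> X) (L : R) : 0 < L ->
  (forall n a b, dX (f n a) (f n b) <= L * dX a b) ->
  exists phi F, incr phi /\
    (forall e, 0 < e -> exists N, forall k, (N <= k)%nat -> forall a, dX (f (phi k) a) (F a) < e) /\
    (forall a b, dX (F a) (F b) <= L * dX a b).
Proof.
  intros HL Hf.
  set (Sel := fun (i : nat) (psi : nat -> nat) => epsilon (inhabits (fun k : nat => k))
     (fun sg => incr psi -> incr sg /\ Pcv (fun k => f (psi (sg k)) (dseq i)))).
  assert (HSel : forall i psi, incr psi -> incr (Sel i psi) /\ Pcv (fun k => f (psi (Sel i psi k)) (dseq i))).
  { intros i psi Hpsi. unfold Sel.
    apply (epsilon_spec (inhabits (fun k : nat => k)) (fun sg => incr psi -> incr sg /\ Pcv (fun k => f (psi (sg k)) (dseq i)))); auto.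
    destruct (X_compact (fun k => f (psi k) (dseq i))) as [sg [l [H1 H2]]].
    exists sg. intros _. split; auto. exists l; auto. }
  set (Psi := fix Psi (i : nat) : nat -> nat := match i with
        | O => Sel O (fun k => k)
        | S i' => fun k => Psi i' (Sel i (Psi i') k) end).
  assert (Psi_incr : forall i, incr (Psi i)).
  { induction i; simpl.
    - apply (HSel 0%nat (fun k => k) incr_id).
    - apply incr_comp; auto. apply HSel; auto. }
  assert (Psi_P : forall i, Pcv (fun k => f (Psi i k) (dseq i))).
  { destruct i; simpl.
    - apply (HSel 0%nat (fun k => k) incr_id).
    - apply (HSel (S i) (Psi i) (Psi_incr i)). }
  assert (Psi_sub : forall i j, (i <= j)%nat -> forall k, exists m, (k <= m)%nat /\ Psi j k = Psi i m).
  { intros i j Hij. induction Hij; intro k.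
    - exists k; auto.
    - simpl. destruct (IHHij (Sel (S m) (Psi m) k)) as [m' [Hm1 Hm2]].
      exists m'. split; auto. pose proof (incr_ge _ (proj1 (HSel (S m) (Psi m) (Psi_incr m))) k). lia. }
  set (phi := fun k => Psi k k).
  assert (Hphi : incr phi).
  { intro k. unfold phi. simpl. apply (incr_lt (Psi k) (Psi_incr k)).
    pose proof (incr_ge _ (proj1 (HSel (S k) (Psi k) (Psi_incr k))) (S k)). lia. }
  assert (Hcv : forall i, Pcv (fun k => f (phi k) (dseq i))).
  { intro i. destruct (Psi_P i) as [l Hl]. exists l. intros e He.
    destruct (Hl e He) as [N HN]. exists (N + i)%nat. intros k Hk.
    destruct (Psi_sub i k ltac:(lia) k) as [m [Hm1 Hm2]]. unfold phi. rewrite Hm2.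
    apply HN. lia. }
  assert (Hcauchy_fin : forall N0 e, 0 < e -> exists K, forall i, (i < N0)%nat -> forall k l, (K <= k)%nat -> (K <= l)%nat ->
      dX (f (phi k) (dseq i)) (f (phi l) (dseq i)) < e).
  { intros N0 e He. induction N0.
    - exists 0%nat. intros; lia.
    - destruct IHN0 as [K1 HK1]. destruct (Hcv N0) as [l Hl].
      destruct (Hl (e/2) ltac:(lra')) as [K2 HK2]. exists (K1 + K2)%nat.
      intros i Hi k m Hk Hm. destruct (Nat.eq_dec i N0) as [->|Hne].
      + pose proof (HK2 k ltac:(lia)). pose proof (HK2 m ltac:(lia)). cbv beta in *.
        pose proof (dX_tri (f (phi k) (dseq N0)) l (f (phi m) (dseq N0))).
        rewrite (dX_sym l) in H1. lra'.
      + apply HK1; lia. }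
  assert (Hucauchy : forall e, 0 < e -> exists K, forall k l, (K <= k)%nat -> (K <= l)%nat -> forall a,
      dX (f (phi k) a) (f (phi l) a) < e).
  { intros e He. destruct (totally_bounded (e / (3 * L))) as [N0 HN0].
    { apply Rdiv_lt_0_compat; lra'. }
    destruct (Hcauchy_fin N0 (e/3) ltac:(lra')) as [K HK]. exists K.
    intros k m Hk Hm a. destruct (HN0 a) as [i [Hi Hai]].
    pose proof (Hf (phi k) a (dseq i)). pose proof (Hf (phi m) (dseq i) a).
    rewrite dX_sym in Hai.
    pose proof (HK i Hi k m Hk Hm).
    pose proof (dX_tri (f (phi k) a) (f (phi k) (dseq i)) (f (phi m) a)).
    pose proof (dX_tri (f (phi k) (dseq i)) (f (phi m) (dseq i)) (f (phi m) a)).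
    assert (L * dX (dseq i) a < e / 3).
    { replace (e/3) with (L * (e / (3 * L))) by (field; lra). apply Rmult_lt_compat_l; auto. }
    rewrite (dX_sym a (dseq i)) in H. lra'. }
  set (F := fun a => epsilon (inhabits a) (fun l => cvX (fun k => f (phi k) a) l)).
  assert (HF : forall a, cvX (fun k => f (phi k) a) (F a)).
  { intro a. unfold F. apply (epsilon_spec (inhabits a) (fun l => cvX (fun k => f (phi k) a) l)).
    apply X_complete. intros e He. destruct (Hucauchy e He) as [K HK]. exists K. intros. apply HK; auto. }
  assert (Hunif : forall e, 0 < e -> exists N, forall k, (N <= k)%nat -> forall a, dX (f (phi k) a) (F a) < e).
  { intros e He. destruct (Hucauchy (e/2) ltac:(lra')) as [K HK]. exists K. intros k Hk a.
    destruct (HF a (e/2) ltac:(lra')) as [N HN].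
    specialize (HN (K + N)%nat ltac:(lia)). specialize (HK k (K+N)%nat Hk ltac:(lia) a).
    cbv beta in *. pose proof (dX_tri (f (phi k) a) (f (phi (K+N)%nat) a) (F a)). clear -H HK HN. lra'. }
  exists phi, F. split; auto. split; auto.
  intros a b. apply le_eps. intros h Hh.
  destruct (Hunif (h/2) ltac:(lra')) as [N HN].
  pose proof (HN N (le_n N) a). pose proof (HN N (le_n N) b). pose proof (Hf (phi N) a b).
  pose proof (dX_tri (F a) (f (phi N) a) (F b)).
  pose proof (dX_tri (f (phi N) a) (f (phi N) b) (F b)).
  rewrite (dX_sym (F a) (f (phi N) a)) in H2. lra'.
Qed.

Lemma isom_ch G g p q : isom G g -> ch (G p) (G q) = ch p q.
Proof. intros (_&H&_). apply hd_eq_ch. apply H. Qed.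

Lemma Un_cv_lb (v : nat -> R) l c : Un_cv v l -> (forall n, c <= v n) -> c <= l.
Proof.
  intros H Hn. destruct (Rle_or_lt c l); auto. exfalso.
  destruct (H (c - l)) as [N HN]. lra. specialize (HN N (le_n N)). unfold R_dist in HN.
  specialize (Hn N). apply Rabs_def2 in HN. lra.
Qed.

Lemma cvX_E3 u l : cvX u l -> Un_cv (fun k => E3 (u k)) (E3 l).
Proof.
  intros H e He. destruct (H e He) as [N HN]. exists N. intros n Hn. unfold R_dist.
  eapply Rle_lt_trans. apply E3_lip. apply HN; auto.
Qed.

Lemma cvX_dX u v l m : cvX u l -> cvX v m -> Un_cv (fun k => dX (u k) (v k)) (dX l m).
Proof.
  intros H1 H2 e He. destruct (H1 (e/2) ltac:(lra)) as [N1 HN1]. destruct (H2 (e/2) ltac:(lra)) as [N2 HN2].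
  exists (N1 + N2)%nat. intros n Hn. unfold R_dist.
  specialize (HN1 n ltac:(lia)). specialize (HN2 n ltac:(lia)).
  pose proof (dX_tri (u n) l (v n)). pose proof (dX_tri l m (v n)).
  pose proof (dX_tri l (u n) m). pose proof (dX_tri (u n) (v n) m).
  pose proof (dX_sym l (u n)). pose proof (dX_sym m (v n)).
  apply Rabs_def1; lra.
Qed.

Lemma E3_pos_inl u : 0 < E3 u -> exists p, u = inl p.
Proof. destruct u as [p|z]. eauto. rewrite E3_inr. lra. Qed.

Lemma E3_zero_inr u : E3 u = 0 -> exists z, u = inr z.
Proof. destruct u as [p|z]. pose proof (E3_inl_pos p). lra. eauto. Qed.

Lemma lip_extend (J : X -> X) (C : R) : 0 <= C -> continuousX J ->
  (forall p q, dX (J (inl p)) (J (inl q)) <= C * dX (inl p) (inl q)) ->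
  forall a b, dX (J a) (J b) <= C * dX a b.
Proof.
  intros HC HJ Hin a b. apply le_eps. intros h Hh.
  set (eta := h / (2 + 2 * C)). assert (Heta : 0 < eta) by (unfold eta; apply Rdiv_lt_0_compat; lra).
  destruct (HJ a eta Heta) as [da [Hda Ha]]. destruct (HJ b eta Heta) as [db [Hdb Hb]].
  destruct (dense_inl a (Rmin da eta) ltac:(apply Rmin_glb_lt; lra)) as [p Hp].
  destruct (dense_inl b (Rmin db eta) ltac:(apply Rmin_glb_lt; lra)) as [q Hq].
  pose proof (Rmin_l da eta). pose proof (Rmin_r da eta). pose proof (Rmin_l db eta). pose proof (Rmin_r db eta).
  specialize (Ha (inl p) ltac:(lra)). specialize (Hb (inl q) ltac:(lra)).
  pose proof (Hin p q).
  pose proof (dX_tri (J a) (J (inl p)) (J b)). pose proof (dX_tri (J (inl p)) (J (inl q)) (J b)).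
  pose proof (dX_tri (inl p) a (inl q)). pose proof (dX_tri a b (inl q)).
  rewrite (dX_sym (inl p) a) in H6. rewrite (dX_sym (J (inl q)) (J b)) in H5.
  assert (C * dX (inl p) (inl q) <= C * (eta + dX a b + eta)).
  { apply Rmult_le_compat_l; auto. lra. }
  assert (h = eta * (2 + 2 * C)) by (unfold eta; field; lra).
  nra.
Qed.

Lemma isom_lip_in G g M : isom G g -> ch o (G o) <= M ->
  forall p q, dX (inl (G p)) (inl (G q)) <= (2 * M) * dX (inl p) (inl q).
Proof.
  intros HG HM p q. pose proof (ch_ge1 o (G o)).
  apply le_of_sq. apply dX_ge0. pose proof (dX_ge0 (inl p) (inl q)). nra.
  rewrite Rpow_mult_distr, !dX_inl_sq. rewrite (isom_ch G g p q HG).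
  assert (Lp : ch o p <= 2 * M * ch o (G p)).
  { rewrite <- (isom_ch G g o p HG). pose proof (ch_tri (G o) o (G p)). rewrite ch_sym in HM.
    pose proof (ch_ge1 o (G p)). nra. }
  assert (Lq : ch o q <= 2 * M * ch o (G q)).
  { rewrite <- (isom_ch G g o q HG). pose proof (ch_tri (G o) o (G q)). rewrite ch_sym in HM.
    pose proof (ch_ge1 o (G q)). nra. }
  pose proof (ch_ge1 p q). pose proof (ch_ge1 o p). pose proof (ch_ge1 o q).
  pose proof (ch_ge1 o (G p)). pose proof (ch_ge1 o (G q)).
  set (c := ch p q) in *. set (x := ch o p) in *. set (y := ch o q) in *.
  set (x' := ch o (G p)) in *. set (y' := ch o (G q)) in *. clearbody c x y x' y'.
  unfold Rdiv. 
  assert (Hxy : x * y <= (2*M)^2 * (x' * y')) by nra.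
  assert (0 <= 2 * (c - 1)) by lra.
  apply (Rmult_le_reg_r (x * y * (x' * y'))). repeat apply Rmult_lt_0_compat; lra.
  replace (2 * (c - 1) * / (x' * y') * (x * y * (x' * y'))) with (2 * (c-1) * (x * y)) by (field; repeat split; lra).
  replace ((2 * M) ^ 2 * (2 * (c - 1) * / (x * y)) * (x * y * (x' * y'))) with (2 * (c-1) * ((2*M)^2 * (x' * y'))) by (field; repeat split; lra).
  apply Rmult_le_compat_l; auto.
Qed.

Lemma isom_lip G g M : isom G g -> ch o (G o) <= M ->
  forall a b, dX (joinmap G g a) (joinmap G g b) <= (2 * M) * dX a b.
Proof.
  intros HG HM. pose proof (ch_ge1 o (G o)). apply lip_extend. lra. apply HG.
  intros p q. apply (isom_lip_in G g M HG HM).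
Qed.

Lemma Un_cv_ext (u v : nat -> R) l : (forall n, u n = v n) -> Un_cv u l -> Un_cv v l.
Proof. intros E H e He. destruct (H e He) as [N HN]. exists N. intros. rewrite <- E. auto. Qed.

Lemma Un_cv_const c : Un_cv (fun _ => c) c.
Proof. intros e He. exists 0%nat. intros. unfold R_dist. rewrite Rminus_diag, Rabs_R0. auto. Qed.

Lemma dX_zero_of_small a b : (forall h, 0 < h -> dX a b <= h) -> a = b.
Proof.
  intro H. apply dX_eq0. apply Rle_antisym; [|apply dX_ge0].
  apply le_eps. intros h Hh. rewrite Rplus_0_l. auto.
Qed.

Lemma ch_o_bound G g M p : isom G g -> ch o (G o) <= M -> ch o (G p) <= 2 * M * ch o p.
Proof.
  intros HG HM. pose proof (ch_tri o (G o) (G p)). rewrite (isom_ch G g o p HG) in H.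
  pose proof (ch_ge1 o p). pose proof (ch_ge1 (G o) (G p)). nra.
Qed.

Lemma core (A : nat -> H3 -> H3) (a : nat -> Sph -> Sph) M :
  (forall n, isom (A n) (a n)) -> (forall n, ch o (A n o) <= M) ->
  exists phi A' a', incr phi /\ isom A' a' /\ ch o (A' o) <= M /\
   (forall e, 0 < e -> exists N, forall k, (N <= k)%nat -> forall u,
       dX (joinmap (A (phi k)) (a (phi k)) u) (joinmap A' a' u) < e).
Proof.
  intros HA HM.
  assert (HM1 : 1 <= M) by (pose proof (ch_ge1 o (A 0%nat o)); specialize (HM 0%nat); lra).
  destruct (AA (fun n => joinmap (A n) (a n)) (2*M) ltac:(lra)) as [phi [F [Hp [Hu HL]]]].
  { intros n. apply (isom_lip (A n) (a n) M (HA n) (HM n)). }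
  assert (Hcv : forall u, cvX (fun k => joinmap (A (phi k)) (a (phi k)) u) (F u)).
  { intros u e He. destruct (Hu e He) as [N HN]. exists N. intros. apply HN; auto. }
  assert (Int : forall p, exists q, F (inl p) = inl q).
  { intro p. apply E3_pos_inl.
    assert (Hc : 0 < / (2 * M * ch o p)).
    { apply Rinv_0_lt_compat. pose proof (ch_o_pos p). repeat apply Rmult_lt_0_compat; lra. }
    eapply Rlt_le_trans. apply Hc.
    apply (Un_cv_lb _ _ _ (cvX_E3 _ _ (Hcv (inl p)))). intro n. cbn [joinmap].
    rewrite E3_inl. apply Rinv_le_contravar. apply ch_o_pos.
    apply (ch_o_bound (A (phi n)) (a (phi n))); auto. }
  assert (Bnd : forall z, exists w, F (inr z) = inr w).
  { intro z. apply E3_zero_inr.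
    pose proof (cvX_E3 _ _ (Hcv (inr z))) as H. cbn [joinmap] in H.
    eapply UL_sequence. apply H. eapply Un_cv_ext; [|apply (Un_cv_const 0)].
    intro n. cbv beta. rewrite E3_inr. reflexivity. }
  set (A' := fun p => match F (inl p) with inl q => q | inr _ => p end).
  set (a' := fun z => match F (inr z) with inr w => w | inl _ => z end).
  assert (HFj : forall u, F u = joinmap A' a' u).
  { intros [p|z]; cbn [joinmap].
    - unfold A'. destruct (Int p) as [q Hq]. rewrite Hq. reflexivity.
    - unfold a'. destruct (Bnd z) as [w Hw]. rewrite Hw. reflexivity. }
  assert (HcvI : forall p, cvX (fun k => inl (A (phi k) p)) (inl (A' p))).
  { intro p. rewrite <- (HFj (inl p)) at 1. cbn [joinmap]. exact (Hcv (inl p)). }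
  assert (Hch : forall p q, ch (A' p) (A' q) = ch p q).
  { intros p q.
    set (c := ch p q).
    assert (L1 : Un_cv (fun k => dX (inl (A (phi k) p)) (inl (A (phi k) q)) ^ 2) (dX (inl (A' p)) (inl (A' q)) ^ 2)).
    { apply cv_sq. apply cvX_dX; auto. }
    assert (L2 : Un_cv (fun k => 2 * (c - 1) * E3 (inl (A (phi k) p)) * E3 (inl (A (phi k) q)))
                 (2 * (c - 1) * E3 (inl (A' p)) * E3 (inl (A' q)))).
    { apply CV_mult. apply CV_mult. apply Un_cv_const. apply cvX_E3; auto. apply cvX_E3; auto. }
    assert (L3 : Un_cv (fun k => 2 * (c - 1) * E3 (inl (A (phi k) p)) * E3 (inl (A (phi k) q)))
                 (dX (inl (A' p)) (inl (A' q)) ^ 2)).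
    { eapply Un_cv_ext; [|apply L1]. intro n. cbv beta. rewrite dX_inl_sq, !E3_inl.
      unfold c. rewrite (isom_ch _ _ p q (HA (phi n))).
      pose proof (ch_o_pos (A (phi n) p)). pose proof (ch_o_pos (A (phi n) q)). field. lra. }
    pose proof (UL_sequence _ _ _ L3 L2) as E.
    rewrite dX_inl_sq, !E3_inl in E.
    pose proof (ch_o_pos (A' p)). pose proof (ch_o_pos (A' q)).
    assert (E' : 2 * (ch (A' p) (A' q) - 1) = 2 * (c - 1)).
    { apply (Rmult_eq_reg_r (/ (ch o (A' p) * ch o (A' q)))).
      rewrite Rinv_mult. unfold Rdiv in E. rewrite Rinv_mult in E. lra.
      apply Rinv_neq_0_compat. apply Rgt_not_eq. apply Rmult_lt_0_compat; lra. }
    lra. }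
  assert (Hsurj : forall q, exists p, A' p = q).
  { intro q.
    assert (Hb : forall k, exists b, A (phi k) b = q) by (intro k; apply (proj2 (proj1 (HA (phi k))))).
    destruct (choice _ Hb) as [B HB].
    destruct (X_compact (fun k => inl (B k))) as [psi [l [Hpsi Hl]]].
    assert (HE3 : 0 < E3 l).
    { assert (Hc : 0 < / (2 * M * ch o q)).
      { apply Rinv_0_lt_compat. pose proof (ch_o_pos q). repeat apply Rmult_lt_0_compat; lra. }
      eapply Rlt_le_trans. apply Hc.
      apply (Un_cv_lb _ _ _ (cvX_E3 _ _ Hl)). intro n. cbv beta.
      rewrite E3_inl. apply Rinv_le_contravar. apply ch_o_pos.
      rewrite <- (isom_ch _ _ o (B (psi n)) (HA (phi (psi n)))). rewrite HB.
      pose proof (ch_tri (A (phi (psi n)) o) o q). rewrite (ch_sym (A (phi (psi n)) o) o) in H.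
      pose proof (HM (phi (psi n))). pose proof (ch_ge1 o q). pose proof (ch_ge1 o (A (phi (psi n)) o)). nra. }
    destruct (E3_pos_inl l HE3) as [p ->].
    exists p. 
    assert (inl (A' p) = inl q :> X).
    { apply dX_zero_of_small. intros h Hh.
      assert (Hh' : 0 < h / (4 * M)) by (apply Rdiv_lt_0_compat; lra).
      destruct (Hl _ Hh') as [N1 HN1]. destruct (HcvI p (h/2) ltac:(lra)) as [N2 HN2].
      set (k := (N1 + N2)%nat).
      specialize (HN1 k ltac:(unfold k; lia)). pose proof (incr_ge psi Hpsi k).
      specialize (HN2 (psi k) ltac:(unfold k in *; lia)). cbv beta in HN1, HN2.
      pose proof (isom_lip_in _ _ M (HA (phi (psi k))) (HM _) (B (psi k)) p) as HLp.
      rewrite HB in HLp.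
      pose proof (dX_tri (inl (A' p)) (inl (A (phi (psi k)) p)) (inl q)).
      pose proof (dX_sym (inl (A' p)) (inl (A (phi (psi k)) p))).
      pose proof (dX_sym (inl (A (phi (psi k)) p)) (inl q)).
      assert (2 * M * dX (inl (B (psi k))) (inl p) <= h / 2).
      { replace (h/2) with (2 * M * (h / (4 * M))) by (field; lra).
        apply Rmult_le_compat_l; lra. }
      lra. }
    injection H. auto. }
  assert (HisoA' : isom A' a').
  { split; [split|split].
    - intros p q E. apply ch_eq1. rewrite <- Hch, E. apply ch_refl.
    - exact Hsurj.
    - intros p q. rewrite !hd_ch, Hch. reflexivity.
    - intros u e He. exists (e / (2 * M)). split. apply Rdiv_lt_0_compat; lra.
      intros w Hw. rewrite <- !HFj. eapply Rle_lt_trans. apply HL.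
      replace e with (2 * M * (e / (2 * M))) by (field; lra).
      apply Rmult_lt_compat_l; lra. }
  exists phi, A', a'. split; auto. split; auto. split.
  - assert (H : / M <= E3 (inl (A' o))).
    { apply (Un_cv_lb _ _ _ (cvX_E3 _ _ (HcvI o))). intro n. cbv beta. rewrite E3_inl.
      apply Rinv_le_contravar. apply ch_o_pos. apply HM. }
    rewrite E3_inl in H. pose proof (ch_o_pos (A' o)).
    apply Rinv_le_contravar in H. rewrite !Rinv_inv in H. exact H. apply Rinv_0_lt_compat; lra.
  - intros e He. destruct (Hu e He) as [N HN]. exists N. intros k Hk u. rewrite <- HFj. apply HN; auto.
Qed.

Lemma joinmap_comp G g G' g' u :
  joinmap (fun p => G (G' p)) (fun z => g (g' z)) u = joinmap G g (joinmap G' g' u).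
Proof. destruct u; reflexivity. Qed.

Lemma contX_comp (J1 J2 : X -> X) : continuousX J1 -> continuousX J2 -> continuousX (fun u => J1 (J2 u)).
Proof.
  intros H1 H2 u e He. destruct (H1 (J2 u) e He) as [d1 [Hd1 H1']].
  destruct (H2 u d1 Hd1) as [d2 [Hd2 H2']]. exists d2. split; auto.
Qed.

Lemma isom_comp G g G' g' : isom G g -> isom G' g' -> isom (fun p => G (G' p)) (fun z => g (g' z)).
Proof.
  intros [[Gi Gs] [Gh Gc]] [[Gi' Gs'] [Gh' Gc']]. split; [split|split].
  - intros p q E. apply Gi', Gi, E.
  - intro q. destruct (Gs q) as [r Hr]. destruct (Gs' r) as [p Hp]. exists p. congruence.
  - intros p q. rewrite Gh, Gh'. reflexivity.
  - intros u e He. destruct (contX_comp _ _ Gc Gc' u e He) as [d [Hd Hd']].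
    exists d. split; auto. intros b Hb. rewrite (joinmap_comp G g G' g' u), (joinmap_comp G g G' g' b). apply Hd'; auto.
Qed.

Lemma contX_agree (J1 J2 : X -> X) : continuousX J1 -> continuousX J2 ->
  (forall p, J1 (inl p) = J2 (inl p)) -> forall u, J1 u = J2 u.
Proof.
  intros H1 H2 E u. apply dX_zero_of_small. intros h Hh.
  destruct (H1 u (h/2) ltac:(lra)) as [d1 [Hd1 H1']].
  destruct (H2 u (h/2) ltac:(lra)) as [d2 [Hd2 H2']].
  destruct (dense_inl u (Rmin d1 d2) ltac:(apply Rmin_glb_lt; lra)) as [p Hp].
  pose proof (Rmin_l d1 d2). pose proof (Rmin_r d1 d2).
  specialize (H1' (inl p) ltac:(lra)). specialize (H2' (inl p) ltac:(lra)).
  rewrite E in H1'. pose proof (dX_tri (J1 u) (J2 (inl p)) (J2 u)).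
  rewrite (dX_sym (J2 (inl p)) (J2 u)) in H3. lra.
Qed.

Lemma INR_unbounded (x : R) : exists n : nat, x < INR n.
Proof.
  destruct (archimed x) as [H _]. exists (Z.to_nat (up x)).
  destruct (Z_le_gt_dec 0 (up x)).
  - rewrite INR_IZR_INZ, Z2Nat.id by auto. lra.
  - assert (IZR (up x) <= 0) by (apply IZR_le; lia). pose proof (pos_INR (Z.to_nat (up x))). lra.
Qed.

Lemma compact_bound K : compactH K -> exists B, forall p, K p -> ch o p <= B.
Proof.
  intro HK. apply NNPP. intro Hn.
  assert (Hs : forall n : nat, exists p, K p /\ INR n < ch o p).
  { intro n. apply NNPP. intro H1. apply Hn. exists (INR n). intros p Kp.
    apply Rnot_lt_le. intro H2. apply H1. eauto. }
  destruct (choice _ Hs) as [u Hu].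
  destruct (HK u (fun n => proj1 (Hu n))) as [phi [q [Hphi [Kq Hcv]]]].
  destruct (Hcv 1 ltac:(lra)) as [N HN].
  destruct (INR_unbounded (2 * ch o q * exp 1)) as [m Hm].
  set (k := (N + m)%nat).
  specialize (HN k ltac:(unfold k; lia)).
  assert (Hphi' : (k <= phi k)%nat) by (apply (incr_ge phi); exact Hphi).
  destruct (Hu (phi k)) as [_ Hb].
  pose proof (ch_le_exp_hd (u (phi k)) q).
  assert (exp (hd (u (phi k)) q) <= exp 1) by (left; apply exp_increasing; auto).
  pose proof (ch_tri o q (u (phi k))).
  pose proof (ch_ge1 o q).
  assert (INR m <= INR (phi k)) by (apply le_INR; unfold k in *; lia).
  assert (ch o (u (phi k)) <= 2 * ch o q * exp 1).
  { assert (ch (u (phi k)) q <= exp 1) by lra.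
    assert (2 * ch o q * ch q (u (phi k)) <= 2 * ch o q * exp 1).
    { apply Rmult_le_compat_l. lra. rewrite ch_sym. lra. }
    lra. }
  lra.
Qed.

Lemma bilip_bound (H : H3 -> H3) : bilipschitz_bijection H ->
  forall B, exists B', forall p, ch o p <= B -> ch o (H p) <= B'.
Proof.
  intros [_ [L [HL HLL]]] B.
  exists (2 * ch o (H o) * exp (L * ln (2 * Rmax B 1))). intros p Hp.
  pose proof (ch_tri o (H o) (H p)).
  pose proof (ch_le_exp_hd (H o) (H p)).
  destruct (HLL o p) as [_ H2].
  pose proof (hd_le_ch o p).
  pose proof (ch_ge1 o p).
  assert (ln (2 * ch o p) <= ln (2 * Rmax B 1)).
  { pose proof (Rmax_l B 1). destruct (Req_dec (ch o p) (Rmax B 1)) as [E|E]. rewrite E; lra.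
    left. apply ln_increasing; lra. }
  assert (hd (H o) (H p) <= L * ln (2 * Rmax B 1)).
  { eapply Rle_trans. apply H2. apply Rmult_le_compat_l; lra. }
  assert (exp (hd (H o) (H p)) <= exp (L * ln (2 * Rmax B 1))).
  { destruct H6 as [H6|H6]. left; apply exp_increasing; auto. rewrite H6; lra. }
  pose proof (ch_ge1 o (H o)). pose proof (ch_ge1 (H o) (H p)).
  assert (ch (H o) (H p) <= exp (L * ln (2 * Rmax B 1))) by lra.
  nra.
Qed.

Lemma dX_le2 a b : dX a b <= 2.
Proof.
  apply le_of_sq. apply dX_ge0. lra. rewrite dX_sq, sq4_c.
  destruct (embX_sphere a) as [Ha _]. destruct (embX_sphere b) as [Hb _].
  set (a1 := c1 (embX a)) in *. set (a2 := c2 (embX a)) in *. set (a3 := c3 (embX a)) in *. set (a4 := c4 (embX a)) in *.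
  set (b1 := c1 (embX b)) in *. set (b2 := c2 (embX b)) in *. set (b3 := c3 (embX b)) in *. set (b4 := c4 (embX b)) in *.
  clearbody a1 a2 a3 a4 b1 b2 b3 b4.
  assert (0 <= (a1+b1)^2 + (a2+b2)^2 + (a3+b3)^2 + (a4+b4)^2) by (add_sq; lra).
  assert ((a1 - b1)^2 + (a2 - b2)^2 + (a3 - b3)^2 + (a4 - b4)^2 +
          ((a1+b1)^2 + (a2+b2)^2 + (a3+b3)^2 + (a4+b4)^2) = 2 * (a1^2+a2^2+a3^2+a4^2) + 2 * (b1^2+b2^2+b3^2+b4^2)) by ring.
  lra.
Qed.

Lemma dS_small e : 0 < e -> exists d, 0 < d /\ forall z w, dX (inr z) (inr w) < d -> dS z w < e.
Proof.
  intro He. set (y := Rmin (e/4) 1).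
  assert (Hy : 0 < y) by (unfold y; apply Rmin_glb_lt; lra).
  assert (Hy1 : y <= 1) by apply Rmin_r. assert (Hye : y <= e/4) by apply Rmin_l.
  pose proof PI2_1.
  exists (2 * sin y). split. pose proof (sin_gt_0 y Hy ltac:(lra)). lra.
  intros z w Hzw. unfold dS.
  set (x := dX (inr z) (inr w) / 2).
  assert (Hx : 0 <= x <= 1) by (unfold x; pose proof (dX_ge0 (inr z) (inr w)); pose proof (dX_le2 (inr z) (inr w)); lra).
  assert (asin x < y).
  { apply Rnot_le_lt. intro Hle. destruct (Rle_lt_or_eq_dec _ _ Hle) as [Hlt|Heq].
    - pose proof (asin_bound x).
      pose proof (sin_increasing_1 y (asin x) ltac:(lra) ltac:(lra) ltac:(lra) ltac:(lra) Hlt).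
      rewrite sin_asin in H1 by lra. unfold x in H1. lra.
    - rewrite Heq in Hzw. rewrite sin_asin in Hzw by lra. unfold x in Hzw. lra. }
  lra.
Qed.

Lemma hd_from_dX x y C eps : 1 <= C -> ch o x <= C -> ch o y <= C -> 0 < eps -> eps <= 1 ->
  dX (inl x) (inl y) < eps / (3 * C) -> hd x y < eps.
Proof.
  intros HC Hx Hy He He1 Hd. apply hd_small; auto.
  pose proof (dX_inl_sq x y) as E.
  pose proof (ch_o_pos x). pose proof (ch_o_pos y). pose proof (ch_ge1 x y).
  assert (E' : ch x y - 1 = dX (inl x) (inl y) ^ 2 * (ch o x * ch o y) / 2).
  { rewrite E. field. split; lra. }
  rewrite E'. pose proof (dX_ge0 (inl x) (inl y)).
  set (d := dX (inl x) (inl y)) in *. clearbody d.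
  assert (d^2 <= (eps / (3*C))^2) by (apply pow_incr; lra).
  assert (ch o x * ch o y <= C * C) by (apply Rmult_le_compat; lra).
  assert (0 <= d^2) by apply pow2_ge_0.
  assert (d ^ 2 * (ch o x * ch o y) <= (eps / (3*C))^2 * (C * C)).
  { apply Rmult_le_compat; try lra. apply Rmult_le_pos; lra. }
  assert ((eps / (3*C))^2 * (C * C) = eps * eps / 9) by (field; lra).
  assert (0 <= eps * eps) by nra.
  lra.
Qed.

Theorem lemma1p4 (H : H3 -> H3) (h : Sph -> Sph)
    (Gam1 Gam2 : (H3 -> H3) -> (Sph -> Sph) -> Prop)
    (Hn : nat -> H3 -> H3) (hn : nat -> Sph -> Sph) :
  equivariant_pair H h Gam1 Gam2 ->
  derived H h Hn hn ->
  tame Hn ->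
  exists (fI gI : H3 -> H3) (fB gB : Sph -> Sph),
    isom fI fB /\ isom gI gB /\
    exists phi : nat -> nat,
      (forall k, (phi k < phi (S k))%nat) /\
      unif_cvg_compacts (fun k => Hn (phi k)) (fun p => fI (H (gI p))) /\
      unif_cvg_S (fun k => hn (phi k)) (fun z => fB (h (gB z))).
Proof.
  intros HE Hder Htame.
  destruct HE as [HHb [Hhh [HJ [NL1 [NL2 [Eq1 Eq2]]]]]].
  destruct NL1 as [SG1 [_ [_ CC1]]]. destruct NL2 as [SG2 _].
  destruct SG1 as [Hiso1 [_ [_ Hinv1]]]. destruct SG2 as [Hiso2 _].
  destruct Hder as [fI [gI [fB [gB [HfI [HgI [HHn Hhn]]]]]]].
  destruct CC1 as [K1 [HK1 Hcov]].
  destruct (compact_bound K1 HK1) as [B1 HB1].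
  destruct (bilip_bound H HHb B1) as [B2 HB2].
  pose proof HHb as [[Hinj Hsurj] _].
  destruct (choice _ Hsurj) as [Hinv HHinv].
  assert (Hinv_l : forall p, Hinv (H p) = p) by (intro p; apply Hinj; apply HHinv).
  assert (Dn : forall n : nat, exists t : ((H3 -> H3) * (Sph -> Sph)) * H3,
     Gam1 (fst (fst t)) (snd (fst t)) /\ K1 (snd t) /\ fst (fst t) (snd t) = gI n o).
  { intro n. destruct (Hcov (gI n o)) as [G [g [k [HG [Hk Hgk]]]]]. exists ((G, g), k). simpl; auto. }
  destruct (choice _ Dn) as [T HT].
  set (Gs := fun n => fst (fst (T n))). set (gs := fun n => snd (fst (T n))). set (ks := fun n => snd (T n)).
  assert (HGs : forall n, Gam1 (Gs n) (gs n)) by (intro n; apply HT).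
  assert (Hks : forall n, K1 (ks n)) by (intro n; apply HT).
  assert (HGk : forall n, Gs n (ks n) = gI n o) by (intro n; apply HT).
  assert (Di : forall n : nat, exists t : (H3 -> H3) * (Sph -> Sph), Gam1 (fst t) (snd t) /\
     (forall p, Gs n (fst t p) = p) /\ (forall p, fst t (Gs n p) = p) /\
     (forall z, gs n (snd t z) = z) /\ (forall z, snd t (gs n z) = z)).
  { intro n. destruct (Hinv1 _ _ (HGs n)) as [G' [g' HH]]. exists (G', g'). exact HH. }
  destruct (choice _ Di) as [Ti HTi].
  set (Gi := fun n => fst (Ti n)). set (gi := fun n => snd (Ti n)).
  assert (HGi : forall n, Gam1 (Gi n) (gi n)) by (intro n; apply HTi).
  assert (HGsGi : forall n p, Gs n (Gi n p) = p) by (intro n; apply HTi).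
  assert (HGiGs : forall n p, Gi n (Gs n p) = p) by (intro n; apply HTi).
  assert (HgsGi : forall n z, gs n (gi n z) = z) by (intro n; apply HTi).
  set (Fs := fun n p => H (Gs n (Hinv p))).
  assert (Df : forall n, exists f, Gam2 (Fs n) f).
  { intro n. apply (proj2 (Eq1 (Fs n))). exists (Gs n), (gs n). split; auto.
    intro p. unfold Fs. rewrite Hinv_l. reflexivity. }
  destruct (choice _ Df) as [fs Hfs].
  assert (HFsH : forall n p, Fs n (H p) = H (Gs n p)) by (intros n p; unfold Fs; rewrite Hinv_l; reflexivity).
  assert (Hbd : forall n z, fs n (h z) = h (gs n z)).
  { intros n z.
    assert (E : forall u, joinmap (Fs n) (fs n) (joinmap H h u) = joinmap H h (joinmap (Gs n) (gs n) u)).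
    { apply contX_agree.
      - apply contX_comp. apply (Hiso2 _ _ (Hfs n)). exact HJ.
      - apply contX_comp. exact HJ. apply (Hiso1 _ _ (HGs n)).
      - intro p. cbn [joinmap]. rewrite HFsH. reflexivity. }
    specialize (E (inr z)). cbn [joinmap] in E. injection E. auto. }
  set (A := fun n p => fI n (Fs n p)). set (a := fun n z => fB n (fs n z)).
  set (Bm := fun n p => Gi n (gI n p)). set (b := fun n z => gi n (gB n z)).
  assert (HisoA : forall n, isom (A n) (a n)).
  { intro n. apply (isom_comp (fI n) (fB n) (Fs n) (fs n)). apply HfI. apply (Hiso2 _ _ (Hfs n)). }
  assert (HisoB : forall n, isom (Bm n) (b n)).
  { intro n. apply (isom_comp (Gi n) (gi n) (gI n) (gB n)). apply (Hiso1 _ _ (HGi n)). apply HgI. }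
  assert (DecI : forall n p, Hn n p = A n (H (Bm n p))).
  { intros n p. rewrite HHn. unfold A, Bm. rewrite HFsH, HGsGi. reflexivity. }
  assert (DecB : forall n z, hn n z = a n (h (b n z))).
  { intros n z. rewrite Hhn. unfold a, b. rewrite Hbd, HgsGi. reflexivity. }
  assert (HBo : forall n, Bm n o = ks n).
  { intro n. unfold Bm. rewrite <- HGk. apply HGiGs. }
  assert (HBob : forall n, ch o (Bm n o) <= B1) by (intro n; rewrite HBo; apply HB1, Hks).
  destruct (Htame o) as [q [r Hqr]].
  set (Tm := 2 * ch o q * exp r).
  assert (HT1 : forall n, ch o (Hn n o) <= Tm).
  { intro n. pose proof (ch_tri o q (Hn n o)). pose proof (ch_le_exp_hd q (Hn n o)).
    assert (exp (hd q (Hn n o)) <= exp r).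
    { destruct (Hqr n) as [Hl|Hl]. left; apply exp_increasing; auto. rewrite Hl; lra. }
    pose proof (ch_ge1 o q).
    assert (2 * ch o q * ch q (Hn n o) <= 2 * ch o q * exp r) by (apply Rmult_le_compat_l; lra).
    unfold Tm. lra. }
  set (MA := 2 * Tm * B2).
  assert (HAo : forall n, ch o (A n o) <= MA).
  { intro n. pose proof (ch_tri o (A n (H (ks n))) (A n o)).
    rewrite (isom_ch _ _ _ _ (HisoA n)) in H0.
    rewrite <- HBo, <- DecI in H0.
    assert (HH2 : ch (H (Bm n o)) o <= B2) by (rewrite ch_sym; apply HB2; apply HBob).
    pose proof (HT1 n). pose proof (ch_ge1 o (Hn n o)). pose proof (ch_ge1 (H (Bm n o)) o).
    assert (2 * ch o (Hn n o) * ch (H (Bm n o)) o <= 2 * Tm * B2).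
    { apply Rmult_le_compat; lra. }
    unfold MA. lra. }
  assert (HMA : 1 <= MA) by (pose proof (HAo 0%nat); pose proof (ch_ge1 o (A 0%nat o)); lra).
  destruct (core A a MA HisoA HAo) as [phi1 [A' [a' [Hp1 [HisoA' [HA'o HunifA]]]]]].
  destruct (core (fun k => Bm (phi1 k)) (fun k => b (phi1 k)) B1 (fun k => HisoB (phi1 k)) (fun k => HBob (phi1 k)))
    as [phi2 [B' [b' [Hp2 [HisoB' [HB'o HunifB]]]]]].
  assert (HB1' : 1 <= B1) by (pose proof (HBob 0%nat); pose proof (ch_ge1 o (Bm 0%nat o)); lra).
  set (phi := fun k => phi1 (phi2 k)).
  assert (Key : forall e, 0 < e -> exists N, forall k, (N <= k)%nat -> forall u,
     dX (joinmap (A (phi1 (phi2 k))) (a (phi1 (phi2 k))) (joinmap H h (joinmap (Bm (phi1 (phi2 k))) (b (phi1 (phi2 k))) u)))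
        (joinmap A' a' (joinmap H h (joinmap B' b' u))) < e).
  { intros e He.
    destruct (unif_cont (joinmap H h) HJ (e / (4 * MA))) as [d [Hd Hdd]].
    { apply Rdiv_lt_0_compat; lra. }
    destruct (HunifB d Hd) as [N2 HN2]. destruct (HunifA (e/2) ltac:(lra)) as [N1 HN1].
    exists (N1 + N2)%nat. intros k Hk u. unfold phi. 
    pose proof (incr_ge phi2 Hp2 k).
    specialize (HN2 k ltac:(lia) u). specialize (HN1 (phi2 k) ltac:(lia)
       (joinmap H h (joinmap (Bm (phi1 (phi2 k))) (b (phi1 (phi2 k))) u))).
    cbv beta in HN2, HN1. specialize (Hdd _ _ HN2).
    pose proof (isom_lip A' a' MA HisoA' HA'o (joinmap H h (joinmap (Bm (phi1 (phi2 k))) (b (phi1 (phi2 k))) u))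
       (joinmap H h (joinmap B' b' u))).
    pose proof (dX_tri (joinmap (A (phi1 (phi2 k))) (a (phi1 (phi2 k))) (joinmap H h (joinmap (Bm (phi1 (phi2 k))) (b (phi1 (phi2 k))) u)))
       (joinmap A' a' (joinmap H h (joinmap (Bm (phi1 (phi2 k))) (b (phi1 (phi2 k))) u)))
       (joinmap A' a' (joinmap H h (joinmap B' b' u)))).
    assert (2 * MA * dX (joinmap H h (joinmap (Bm (phi1 (phi2 k))) (b (phi1 (phi2 k))) u)) (joinmap H h (joinmap B' b' u)) <= e / 2).
    { replace (e/2) with (2 * MA * (e / (4 * MA))) by (field; lra).
      apply Rmult_le_compat_l; lra. }
    lra. }
  exists A', B', a', b'. split; auto. split; auto.
  exists phi. split; [|split].
  - exact (incr_comp phi1 phi2 Hp1 Hp2).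
  - intros K HK eps Heps.
    destruct (compact_bound K HK) as [BK HBK].
    destruct (bilip_bound H HHb (2 * B1 * BK)) as [B3 HB3].
    set (C := 2 * MA * Rmax B3 1).
    assert (HC : 1 <= C) by (unfold C; pose proof (Rmax_r B3 1); nra).
    set (eps' := Rmin eps 1).
    assert (He' : 0 < eps') by (unfold eps'; apply Rmin_glb_lt; lra).
    destruct (Key (eps' / (3 * C))) as [N HN].
    { apply Rdiv_lt_0_compat; lra. }
    exists N. intros k Hk p Kp.
    specialize (HN k Hk (inl p)). cbn [joinmap] in HN. change (phi1 (phi2 k)) with (phi k) in HN. rewrite <- DecI in HN.
    assert (Bx : forall G g, isom G g -> ch o (G o) <= B1 -> ch o (H (G p)) <= Rmax B3 1).
    { intros G g HG HGo. eapply Rle_trans; [|apply Rmax_l]. apply HB3.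
      eapply Rle_trans. apply (ch_o_bound G g B1 p HG HGo).
      pose proof (HBK p Kp). pose proof (ch_ge1 o p). nra. }
    assert (Cx : ch o (Hn (phi k) p) <= C).
    { rewrite DecI. eapply Rle_trans. apply (ch_o_bound _ _ MA _ (HisoA (phi k)) (HAo _)).
      unfold C. apply Rmult_le_compat_l. lra. apply (Bx _ _ (HisoB (phi k)) (HBob _)). }
    assert (Cy : ch o (A' (H (B' p))) <= C).
    { eapply Rle_trans. apply (ch_o_bound _ _ MA _ HisoA' HA'o).
      unfold C. apply Rmult_le_compat_l. lra. apply (Bx _ _ HisoB' HB'o). }
    eapply Rlt_le_trans. apply (hd_from_dX _ _ C eps'); auto. apply Rmin_r. apply Rmin_l.
  - intros eps Heps. destruct (dS_small eps Heps) as [d [Hd Hdd]].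
    destruct (Key d Hd) as [N HN]. exists N. intros k Hk z.
    specialize (HN k Hk (inr z)). cbn [joinmap] in HN. change (phi1 (phi2 k)) with (phi k) in HN. rewrite <- DecB in HN.
    apply Hdd. exact HN.
Qed.
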